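(* (a) Let $\mu$ be a real matrix measure on $[0,1]$ with canonical moments $U_n^\mu$, let $a<b$, $\gamma(x)=(b-a)x+a$, and let $\nu=\mu^\gamma$ be the image measure on $[a,b]$ with canonical moments $U_n^\nu$. Then $U_n^\nu=U_n^\mu$ whenever these are defined. (b) If a matrix measure on an interval $[a,b]$ is symmetric (invariant under the reflection $x\mapsto a+b-x$), then its odd canonical moments satisfy $U_{2n-1}=\tfrac12I_p$ whenever defined. (c) Let $\mu$ be a matrix measure on $[0,1]$ with canonical moments $U_n^\mu$ and let $\sigma$ be the symmetric matrix measure on $[-1,1]$ determined by $\sigma([-x,x])=\mu([0,x^2])$, with canonical moments $U_n^\sigma$. Then $U^\sigma_{2n-1}=\tfrac12I_p$ and $U^\sigma_{2n}=U^\mu_n$ whenever defined.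
   Context: A real matrix measure on an interval $[a,b]$ is a $p\times p$ matrix of signed Borel measures $\mu$ with $\mu(B)$ symmetric nonnegative definite for every Borel $B\subset[a,b]$ and $\mu([a,b])=I_p$; its moments are $T_k=\int x^kd\mu(x)$, $T_0=I_p$. For given moments $T_0,\dots,T_{k-1}$ of such a measure, let $T_k^+$ and $T_k^-$ denote the maximal and minimal matrices (in the Loewner order) $T$ such that $(T_1,\dots,T_{k-1},T)$ is the moment vector of a matrix measure on $[a,b]$. When $T_k^+-T_k^->0$ (positive definite), the ($k$th, symmetric) canonical moment is $U_k=(T_k^+-T_k^-)^{-1/2}(T_k-T_k^-)(T_k^+-T_k^-)^{-1/2}$; otherwise it is undefined. (For $[0,1]$ these extremes $S_k^\pm$ are given by explicit Hankel-matrix formulas and the canonical moments are defined whenever the moment vector lies in the interior of the moment space.) *)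

(* Defs.v *)
From Stdlib Require Import Reals Lra Lia.
Open Scope R_scope.

(** p x p real matrices, represented as functions; only indices < p matter. *)
Definition Mat := nat -> nat -> R.

Fixpoint sumR (n : nat) (f : nat -> R) : R :=
  match n with O => 0 | S m => sumR m f + f m end.

Definition meq (p : nat) (A B : Mat) : Prop :=
  forall i j, (i < p)%nat -> (j < p)%nat -> A i j = B i j.

Definition idm : Mat := fun i j => if Nat.eqb i j then 1 else 0.
Definition half_idm : Mat := fun i j => / 2 * idm i j.
Definition msub (A B : Mat) : Mat := fun i j => A i j - B i j.
Definition mmul (p : nat) (A B : Mat) : Mat :=
  fun i j => sumR p (fun l => A i l * B l j).

Definition qform (p : nat) (A : Mat) (v : nat -> R) : R :=
  sumR p (fun i => sumR p (fun j => v i * A i j * v j)).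

Definition msym (p : nat) (A : Mat) : Prop :=
  forall i j, (i < p)%nat -> (j < p)%nat -> A i j = A j i.

Definition psd (p : nat) (A : Mat) : Prop :=
  msym p A /\ forall v, 0 <= qform p A v.

Definition pd (p : nat) (A : Mat) : Prop :=
  msym p A /\ forall v, (exists i, (i < p)%nat /\ v i <> 0) -> 0 < qform p A v.

Definition loewner_le (p : nat) (A B : Mat) : Prop := psd p (msub B A).

Inductive borel : (R -> Prop) -> Prop :=
| borel_halfline (c : R) : borel (fun x => x <= c)
| borel_compl (A : R -> Prop) : borel A -> borel (fun x => ~ A x)
| borel_cunion (A : nat -> R -> Prop) :
    (forall n, borel (A n)) -> borel (fun x => exists n, A n x)
| borel_ext (A B : R -> Prop) : borel A -> (forall x, A x <-> B x) -> borel B.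

(** A matrix-valued set function (only its values on Borel sets matter). *)
Definition mmeasure := (R -> Prop) -> Mat.

Definition is_matrix_measure (p : nat) (a b : R) (mu : mmeasure) : Prop :=
  (forall B, borel B -> psd p (mu B)) /\
  (forall (A : nat -> R -> Prop) (C : R -> Prop),
      (forall n, borel (A n)) ->
      (forall n m x, n <> m -> A n x -> A m x -> False) ->
      borel C -> (forall x, C x <-> exists n, A n x) ->
      forall i j, (i < p)%nat -> (j < p)%nat ->
        Un_cv (fun N => sumR (S N) (fun n => mu (A n) i j)) (mu C i j)) /\
  (forall B, borel B -> (forall x, B x -> x < a \/ b < x) ->
      forall i j, (i < p)%nat -> (j < p)%nat -> mu B i j = 0) /\
  meq p (mu (fun x => a <= x <= b)) idm.

Definition cell (x : nat -> R) (l : nat) : R -> Prop :=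
  fun t => ((l = O /\ x O <= t) \/ ((0 < l)%nat /\ x l < t)) /\ t <= x (S l).

Definition is_integral (p : nat) (mu : mmeasure) (a b : R) (f : R -> R)
    (M : Mat) : Prop :=
  forall eps, 0 < eps -> exists delta, 0 < delta /\
    forall (n : nat) (x xi : nat -> R),
      (0 < n)%nat -> x O = a -> x n = b ->
      (forall l, (l < n)%nat ->
          x l < x (S l) /\ x (S l) - x l < delta /\ x l <= xi l <= x (S l)) ->
      forall i j, (i < p)%nat -> (j < p)%nat ->
        Rabs (sumR n (fun l => f (xi l) * mu (cell x l) i j) - M i j) < eps.

Definition is_moment (p : nat) (mu : mmeasure) (a b : R) (k : nat) (M : Mat)
  : Prop := is_integral p mu a b (fun x => x ^ k) M.

Definition moment_set (p : nat) (a b : R) (T : nat -> Mat) (k : nat)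
    (T' : Mat) : Prop :=
  exists rho, is_matrix_measure p a b rho /\
    (forall j, (1 <= j)%nat -> (j < k)%nat -> is_moment p rho a b j (T j)) /\
    is_moment p rho a b k T'.

(** canonical_moment p a b mu k U : the k-th (symmetric) canonical moment of
    mu (as a measure on [a,b]) is defined and equals U:
    U = (T+ - T-)^{-1/2} (T_k - T-) (T+ - T-)^{-1/2}, where T+ / T- are the
    Loewner-maximal / minimal elements of the moment_set, and T+ - T- > 0.
    S plays the role of (T+ - T-)^{-1/2}: the symmetric positive definite
    matrix with S S (T+ - T-) = I. *)
Definition canonical_moment (p : nat) (a b : R) (mu : mmeasure) (k : nat)
    (U : Mat) : Prop :=
  (1 <= k)%nat /\
  exists (T : nat -> Mat) (Tp Tm S : Mat),
    (forall j, (j <= k)%nat -> is_moment p mu a b j (T j)) /\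
    moment_set p a b T k Tp /\
    (forall T', moment_set p a b T k T' -> loewner_le p T' Tp) /\
    moment_set p a b T k Tm /\
    (forall T', moment_set p a b T k T' -> loewner_le p Tm T') /\
    pd p (msub Tp Tm) /\
    pd p S /\
    meq p (mmul p S (mmul p S (msub Tp Tm))) idm /\
    meq p U (mmul p S (mmul p (msub (T k) Tm) S)).

Definition image_affine (a b : R) (mu : mmeasure) : mmeasure :=
  fun B => mu (fun x => B ((b - a) * x + a)).

Definition symmetric_measure (p : nat) (a b : R) (mu : mmeasure) : Prop :=
  forall B, borel B -> meq p (mu B) (mu (fun x => B (a + b - x))).

(* Main.v *)
Require Import Defs.
From Stdlib Require Import Reals Lra Lia Psatz Classical ClassicalEpsilon.
Open Scope R_scope.

Lemma sumR_ext n f g : (forall l, (l < n)%nat -> f l = g l) -> sumR n f = sumR n g.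
Proof. induction n; simpl; intros H; auto. rewrite IHn by (intros; apply H; lia). rewrite H by lia. auto. Qed.

Lemma sumR_plus n f g : sumR n (fun l => f l + g l) = sumR n f + sumR n g.
Proof. induction n; simpl; [lra| rewrite IHn; lra]. Qed.

Lemma sumR_minus n f g : sumR n (fun l => f l - g l) = sumR n f - sumR n g.
Proof. induction n; simpl; [lra| rewrite IHn; lra]. Qed.

Lemma sumR_scal n c f : sumR n (fun l => c * f l) = c * sumR n f.
Proof. induction n; simpl; [lra| rewrite IHn; lra]. Qed.

Lemma sumR_zero n f : (forall l, (l < n)%nat -> f l = 0) -> sumR n f = 0.
Proof. induction n; simpl; intros H; auto. rewrite IHn, H; try lra; try lia. intros; apply H; lia. Qed.

Lemma sumR_le n f g : (forall l, (l < n)%nat -> f l <= g l) -> sumR n f <= sumR n g.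
Proof. induction n; simpl; intros H; [lra|]. assert (f n <= g n) by (apply H; lia).
  assert (sumR n f <= sumR n g) by (apply IHn; intros; apply H; lia). lra. Qed.

Lemma sumR_abs n f : Rabs (sumR n f) <= sumR n (fun l => Rabs (f l)).
Proof. induction n; simpl. rewrite Rabs_R0; lra.
  eapply Rle_trans; [apply Rabs_triang|]. lra. Qed.

Lemma sumR_swap n m F : sumR n (fun l => sumR m (fun r => F l r)) = sumR m (fun r => sumR n (fun l => F l r)).
Proof. induction n; simpl. rewrite sumR_zero; auto.
  rewrite IHn. rewrite <- sumR_plus. reflexivity. Qed.

Lemma sumR_split n m f : sumR (n + m) f = sumR n f + sumR m (fun l => f (n + l)%nat).
Proof. induction m; simpl. rewrite Nat.add_0_r; lra.
  rewrite Nat.add_succ_r; simpl. rewrite IHm; lra. Qed.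

Lemma sumR_single n i c f : (i < n)%nat -> (forall l, (l < n)%nat -> l <> i -> f l = 0) -> f i = c -> sumR n f = c.
Proof. induction n; intros Hi H Hc; [lia|]. simpl.
  destruct (Nat.eq_dec i n). subst. rewrite sumR_zero. lra. intros; apply H; lia.
  rewrite IHn; auto; try lia. rewrite H; auto; try lra; try lia. Qed.

Lemma sumR_nonneg n f : (forall l, (l < n)%nat -> 0 <= f l) -> 0 <= sumR n f.
Proof. intros H. rewrite <- (sumR_zero n (fun _ => 0)) by auto. apply sumR_le; auto. Qed.

Lemma sumR_const n c : sumR n (fun _ => c) = INR n * c.
Proof. induction n; simpl sumR. simpl; lra. rewrite IHn, S_INR; lra. Qed.

Lemma sumR_opp n f : sumR n (fun l => - f l) = - sumR n f.
Proof. induction n; simpl; [lra| rewrite IHn; lra]. Qed.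

Lemma sumR_f_R0 f n : sum_f_R0 f n = sumR (S n) f.
Proof. induction n; simpl. lra. rewrite IHn. simpl. lra. Qed.

Lemma sumR_nonneg_zero n f : (forall l, (l < n)%nat -> 0 <= f l) -> sumR n f = 0 -> forall l, (l < n)%nat -> f l = 0.
Proof. induction n; intros H Hs l Hl; [lia|]. simpl in Hs.
  assert (0 <= sumR n f) by (apply sumR_nonneg; intros; apply H; lia).
  assert (0 <= f n) by (apply H; lia).
  destruct (Nat.eq_dec l n). subst; lra. apply IHn; [intros; apply H; lia| lra| lia]. Qed.

Definition bil (p : nat) (A : Mat) (u w : nat -> R) : R :=
  sumR p (fun i => sumR p (fun j => u i * A i j * w j)).

Definition ev (i : nat) : nat -> R := fun l => if Nat.eqb l i then 1 else 0.

Lemma bil_ev p A i j : (i < p)%nat -> (j < p)%nat -> bil p A (ev i) (ev j) = A i j.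
Proof. intros Hi Hj. unfold bil. apply sumR_single with i; auto.
  intros l Hl Hne. apply sumR_zero. intros. unfold ev. rewrite (proj2 (Nat.eqb_neq l i) Hne). lra.
  apply sumR_single with j; auto. intros l Hl Hne. unfold ev. rewrite (proj2 (Nat.eqb_neq l j) Hne). lra.
  unfold ev. rewrite !Nat.eqb_refl. lra. Qed.

Lemma bil_lin_l p A a b u u' w : bil p A (fun l => a * u l + b * u' l) w = a * bil p A u w + b * bil p A u' w.
Proof. unfold bil. rewrite <- !sumR_scal, <- sumR_plus. apply sumR_ext; intros.
  rewrite <- !sumR_scal, <- sumR_plus. apply sumR_ext; intros. ring. Qed.

Lemma bil_lin_r p A a b u w w' : bil p A u (fun l => a * w l + b * w' l) = a * bil p A u w + b * bil p A u w'.
Proof. unfold bil. rewrite <- !sumR_scal, <- sumR_plus. apply sumR_ext; intros.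
  rewrite <- !sumR_scal, <- sumR_plus. apply sumR_ext; intros. ring. Qed.

Lemma qform_bil p A v : qform p A v = bil p A v v.
Proof. reflexivity. Qed.

Lemma qform_two p A i j a b : (i < p)%nat -> (j < p)%nat ->
  qform p A (fun l => a * ev i l + b * ev j l) = a*a*A i i + a*b*(A i j + A j i) + b*b*A j j.
Proof. intros. rewrite qform_bil, bil_lin_l, !bil_lin_r, !bil_ev; auto. ring. Qed.

Lemma qform_ev p A i : (i < p)%nat -> qform p A (ev i) = A i i.
Proof. intros. rewrite qform_bil, bil_ev; auto. Qed.

Lemma psd_diag p A i : psd p A -> (i < p)%nat -> 0 <= A i i.
Proof. intros [_ H] Hi. rewrite <- (qform_ev p A i Hi); auto. Qed.

Lemma psd_entry p A i j : psd p A -> (i < p)%nat -> (j < p)%nat -> Rabs (A i j) <= (A i i + A j j) / 2.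
Proof. intros [Hs H] Hi Hj. pose proof (H (fun l => 1 * ev i l + 1 * ev j l)) as H1.
  pose proof (H (fun l => 1 * ev i l + (-1) * ev j l)) as H2.
  rewrite qform_two in H1, H2 by auto. rewrite (Hs j i) in H1, H2 by auto.
  apply Rabs_le; lra. Qed.

Lemma qform_lin p A B a b v : qform p (fun i j => a * A i j + b * B i j) v = a * qform p A v + b * qform p B v.
Proof. unfold qform. rewrite <- !sumR_scal, <- sumR_plus. apply sumR_ext; intros.
  rewrite <- !sumR_scal, <- sumR_plus. apply sumR_ext; intros. ring. Qed.

Lemma qform_meq p A B v : meq p A B -> qform p A v = qform p B v.
Proof. intros H. unfold qform. apply sumR_ext; intros. apply sumR_ext; intros. rewrite H; auto. Qed.

Lemma qform_msub p A B v : qform p (msub A B) v = qform p A v - qform p B v.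
Proof. unfold msub. replace (qform p A v - qform p B v) with (1 * qform p A v + (-1) * qform p B v) by ring.
  rewrite <- qform_lin. apply qform_meq. intros i j _ _; ring. Qed.

Lemma qform_zvec p A v : (forall i, (i < p)%nat -> v i = 0) -> qform p A v = 0.
Proof. intros H. unfold qform. apply sumR_zero; intros. apply sumR_zero; intros. rewrite H; auto; ring. Qed.

Lemma pd_nonneg p A v : pd p A -> 0 <= qform p A v.
Proof. intros [_ H]. destruct (classic (exists i, (i < p)%nat /\ v i <> 0)) as [E|E].
  left; apply H; auto. rewrite qform_zvec. lra. intros i Hi. apply NNPP. intro; apply E; eauto. Qed.

Lemma pd_psd p A : pd p A -> psd p A.
Proof. intros H. split. apply H. intros; apply pd_nonneg; auto. Qed.

Lemma pd_zero p A v : pd p A -> qform p A v = 0 -> forall i, (i < p)%nat -> v i = 0.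
Proof. intros [_ H] Hq i Hi. apply NNPP; intro Hn. assert (0 < qform p A v) by (apply H; eauto). lra. Qed.

Lemma qform_zero_sym p A : msym p A -> (forall v, qform p A v = 0) -> meq p A (fun _ _ => 0).
Proof. intros Hs H i j Hi Hj. pose proof (H (fun l => 1 * ev i l + 1 * ev j l)) as H1.
  rewrite qform_two in H1 by auto. pose proof (H (ev i)) as H2. pose proof (H (ev j)) as H3.
  rewrite qform_ev in H2, H3 by auto. rewrite (Hs j i) in H1 by auto. lra. Qed.

Lemma loewner_q p A B : loewner_le p A B -> forall v, qform p A v <= qform p B v.
Proof. intros [_ H] v. specialize (H v). rewrite qform_msub in H. lra. Qed.

Lemma loewner_of_q p A B : msym p A -> msym p B -> (forall v, qform p A v <= qform p B v) -> loewner_le p A B.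
Proof. intros HA HB H. split. intros i j Hi Hj. unfold msub. rewrite HA, HB; auto.
  intros v. rewrite qform_msub. specialize (H v). lra. Qed.

Lemma q_antisym p A B : msym p A -> msym p B -> (forall v, qform p A v = qform p B v) -> meq p A B.
Proof. intros HA HB H. assert (meq p (msub A B) (fun _ _ => 0)).
  apply qform_zero_sym. intros i j Hi Hj; unfold msub; rewrite HA, HB; auto.
  intros v; rewrite qform_msub, H; ring.
  intros i j Hi Hj. specialize (H0 i j Hi Hj). unfold msub in H0. lra. Qed.

Lemma mmul_assoc p A B C : meq p (mmul p A (mmul p B C)) (mmul p (mmul p A B) C).
Proof. intros i j _ _. unfold mmul.
  transitivity (sumR p (fun l => sumR p (fun r => A i l * B l r * C r j))).
  apply sumR_ext; intros. rewrite <- sumR_scal. apply sumR_ext; intros. ring.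
  rewrite sumR_swap. apply sumR_ext; intros. rewrite Rmult_comm, <- sumR_scal. apply sumR_ext; intros. ring. Qed.

Lemma mmul_idl p A : meq p (mmul p idm A) A.
Proof. intros i j Hi Hj. unfold mmul. apply sumR_single with i; auto.
  intros l _ Hne. unfold idm. rewrite (proj2 (Nat.eqb_neq i l)) by auto. ring.
  unfold idm. rewrite Nat.eqb_refl. ring. Qed.

Lemma mmul_idr p A : meq p (mmul p A idm) A.
Proof. intros i j Hi Hj. unfold mmul. apply sumR_single with j; auto.
  intros l _ Hne. unfold idm. rewrite (proj2 (Nat.eqb_neq l j)) by auto. ring.
  unfold idm. rewrite Nat.eqb_refl. ring. Qed.

Lemma mmul_meq p A A' B B' : meq p A A' -> meq p B B' -> meq p (mmul p A B) (mmul p A' B').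
Proof. intros H1 H2 i j Hi Hj. unfold mmul. apply sumR_ext; intros. rewrite H1, H2; auto. Qed.

Lemma meq_refl p A : meq p A A. Proof. intros i j _ _; auto. Qed.
Lemma meq_sym p A B : meq p A B -> meq p B A. Proof. intros H i j Hi Hj; symmetry; auto. Qed.
Lemma meq_trans p A B C : meq p A B -> meq p B C -> meq p A C.
Proof. intros H1 H2 i j Hi Hj; rewrite H1; auto. Qed.

Definition trm (A : Mat) : Mat := fun i j => A j i.

Lemma mmul_tr p A B : meq p (trm (mmul p A B)) (mmul p (trm B) (trm A)).
Proof. intros i j _ _. unfold trm, mmul. apply sumR_ext; intros; ring. Qed.

Lemma trm_sym p A : msym p A -> meq p (trm A) A.
Proof. intros H i j Hi Hj. unfold trm. auto. Qed.

Lemma trm_meq p A B : meq p A B -> meq p (trm A) (trm B).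
Proof. intros H i j Hi Hj. unfold trm. auto. Qed.

Lemma trm_idm p : meq p (trm idm) idm.
Proof. intros i j _ _. unfold trm, idm. rewrite Nat.eqb_sym. auto. Qed.

Lemma mmul_scal_l p c A B : meq p (mmul p (fun i j => c * A i j) B) (fun i j => c * mmul p A B i j).
Proof. intros i j _ _. unfold mmul. rewrite <- sumR_scal. apply sumR_ext; intros; ring. Qed.
Lemma mmul_scal_r p c A B : meq p (mmul p A (fun i j => c * B i j)) (fun i j => c * mmul p A B i j).
Proof. intros i j _ _. unfold mmul. rewrite <- sumR_scal. apply sumR_ext; intros; ring. Qed.

Lemma meq_scal p c A B : meq p A B -> meq p (fun i j => c * A i j) (fun i j => c * B i j).
Proof. intros H i j Hi Hj. rewrite H; auto. Qed.

Lemma SDS_id p S D : msym p S -> msym p D -> meq p (mmul p S (mmul p S D)) idm ->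
  meq p (mmul p S (mmul p D S)) idm.
Proof. intros HS HD H.
  assert (HL : meq p (mmul p (mmul p D S) S) idm).
  { eapply meq_trans; [|apply trm_idm]. eapply meq_trans; [|apply trm_meq; apply H].
    eapply meq_trans; [|apply meq_sym, mmul_tr]. apply mmul_meq. 2: apply meq_sym, trm_sym; auto.
    eapply meq_trans; [|apply meq_sym, mmul_tr]. apply mmul_meq; apply meq_sym, trm_sym; auto. }
  assert (HR : meq p (mmul p S (mmul p S D)) idm) by auto.
  assert (E : meq p (mmul p D S) (mmul p S D)).
  { eapply meq_trans. apply meq_sym, mmul_idr. eapply meq_trans. apply mmul_meq. apply meq_refl. apply meq_sym, HR.
    eapply meq_trans. apply mmul_assoc. eapply meq_trans. apply mmul_meq. apply HL. apply meq_refl. apply mmul_idl. }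
  eapply meq_trans. apply mmul_meq. apply meq_refl. apply E. auto. Qed.

Lemma pd_root_unique p S1 S2 D : pd p S1 -> pd p S2 -> msym p D ->
  meq p (mmul p S1 (mmul p S1 D)) idm -> meq p (mmul p S2 (mmul p S2 D)) idm -> meq p S1 S2.
Proof. intros H1 H2 HD E1 E2.
  assert (HS1 := proj1 H1). assert (HS2 := proj1 H2).
  assert (HL2 : meq p (mmul p D (mmul p S2 S2)) idm).
  { eapply meq_trans; [|apply trm_idm]. eapply meq_trans; [|apply trm_meq; apply E2].
    eapply meq_trans; [|apply meq_sym, mmul_tr]. eapply meq_trans. apply mmul_assoc. apply mmul_meq.
    eapply meq_trans; [|apply meq_sym, mmul_tr]. apply mmul_meq; apply meq_sym, trm_sym; auto.
    apply meq_sym, trm_sym; auto. }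
  assert (Q : meq p (mmul p S1 S1) (mmul p S2 S2)).
  { eapply meq_trans. apply meq_sym, mmul_idr. eapply meq_trans. apply mmul_meq. apply meq_refl. apply meq_sym, HL2.
    eapply meq_trans. apply mmul_assoc. eapply meq_trans. apply mmul_meq. 2: apply meq_refl.
    eapply meq_trans. apply meq_sym, mmul_assoc. apply E1. apply mmul_idl. }
  set (X := fun i j => S1 i j - S2 i j).
  assert (HX : msym p X) by (intros i j Hi Hj; unfold X; rewrite HS1, HS2; auto).
  set (q1 := fun i => qform p S1 (fun l => X i l)).
  set (q2 := fun i => qform p S2 (fun l => X i l)).
  assert (Z : sumR p q1 + sumR p q2 = 0).
  { transitivity (sumR p (fun i => sumR p (fun l => sumR p (fun m => X i l * (S1 l m * S1 m i - S2 l m * S2 m i))))).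
    2:{ apply sumR_zero; intros i Hi. apply sumR_zero; intros l Hl. rewrite sumR_scal.
        rewrite sumR_minus. specialize (Q l i Hl Hi). unfold mmul in Q. rewrite Q. ring. }
    transitivity (sumR p (fun i => sumR p (fun l => sumR p (fun m => X i l * S1 l m * X m i)))
       + sumR p (fun i => sumR p (fun l => sumR p (fun m => X i l * X l m * S2 m i)))).
    2:{ rewrite <- sumR_plus. apply sumR_ext; intros i Hi. rewrite <- sumR_plus. apply sumR_ext; intros l Hl.
        rewrite <- sumR_plus. apply sumR_ext; intros m Hm. unfold X. ring. }
    f_equal. apply sumR_ext; intros i Hi. unfold q1, qform. apply sumR_ext; intros l Hl. apply sumR_ext; intros m Hm.
    rewrite (HX m i); auto.
    rewrite (sumR_swap p p (fun i l => sumR p (fun m => X i l * X l m * S2 m i))).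
    apply sumR_ext; intros l Hl. unfold q2, qform.
    rewrite (sumR_swap p p (fun i m => X i l * X l m * S2 m i)).
    apply sumR_ext; intros m Hm. apply sumR_ext; intros i Hi. rewrite (HX l i); auto. ring. }
  assert (P1 : forall i, (i < p)%nat -> 0 <= q1 i) by (intros; apply pd_nonneg; auto).
  assert (P2 : forall i, (i < p)%nat -> 0 <= q2 i) by (intros; apply pd_nonneg; auto).
  assert (0 <= sumR p q1) by (apply sumR_nonneg; auto). assert (0 <= sumR p q2) by (apply sumR_nonneg; auto).
  intros i j Hi Hj. assert (q1 i = 0). apply (sumR_nonneg_zero p q1); auto. lra.
  pose proof (pd_zero p S1 (fun l => X i l) H1 H3 j Hj). unfold X in H4. lra. Qed.

Lemma borel_or A B : borel A -> borel B -> borel (fun x => A x \/ B x).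
Proof. intros HA HB. apply borel_ext with (fun x => exists n:nat, (match n with O => A | S _ => B end) x).
  apply borel_cunion. intros [|n]; auto.
  intros x; split. intros [[|n] H]; auto. intros [H|H]. exists O; auto. exists 1%nat; auto. Qed.

Lemma borel_full : borel (fun _ => True).
Proof. apply borel_ext with (fun x => x <= 0 \/ ~ x <= 0). apply borel_or. constructor. constructor; constructor.
  intros x; split; auto. intros _. apply classic. Qed.

Lemma borel_empty : borel (fun _ => False).
Proof. apply borel_ext with (fun x => ~ True). constructor; apply borel_full. intros x; tauto. Qed.

Lemma borel_and A B : borel A -> borel B -> borel (fun x => A x /\ B x).
Proof. intros HA HB. apply borel_ext with (fun x => ~ (~ A x \/ ~ B x)). constructor; apply borel_or; constructor; auto.
  intros x; split. intros H; split; apply NNPP; tauto. tauto. Qed.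

Lemma borel_le c : borel (fun x => x <= c). Proof. constructor. Qed.
Lemma borel_gt c : borel (fun x => c < x).
Proof. apply borel_ext with (fun x => ~ x <= c). constructor; constructor. intros; lra. Qed.

Lemma borel_lt c : borel (fun x => x < c).
Proof. apply borel_ext with (fun x => exists n:nat, x <= c - / (INR n + 1)).
  apply borel_cunion; intros; constructor.
  intros x; split. intros [n H]. assert (0 < / (INR n + 1)) by (apply Rinv_0_lt_compat; pose proof (pos_INR n); lra). lra.
  intros H. destruct (archimed_cor1 (c - x)) as [N [H1 H2]]. lra. exists N.
  assert (0 < INR N) by (apply lt_0_INR; auto).
  assert (/ (INR N + 1) < / INR N) by (apply Rinv_lt_contravar; nra). lra. Qed.

Lemma borel_ge c : borel (fun x => c <= x).
Proof. apply borel_ext with (fun x => ~ x < c). constructor; apply borel_lt. intros; lra. Qed.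

Lemma borel_iff A B : borel A -> (forall x, A x <-> B x) -> borel B.
Proof. apply borel_ext. Qed.

Lemma borel_cc u v : borel (fun x => u <= x <= v).
Proof. apply borel_and; [apply borel_ge|apply borel_le]. Qed.

Lemma borel_finU n A : (forall l, (l < n)%nat -> borel (A l)) -> borel (fun x => exists l, (l < n)%nat /\ A l x).
Proof. intros H. apply borel_ext with (fun x => exists l, (if Nat.ltb l n then A l else fun _ => False) x).
  apply borel_cunion. intros l. destruct (Nat.ltb l n) eqn:E. apply H. apply Nat.ltb_lt; auto. apply borel_empty.
  intros x; split. intros [l Hl]. destruct (Nat.ltb l n) eqn:E. exists l; split; auto; apply Nat.ltb_lt; auto. contradiction.
  intros [l [Hl Hx]]. exists l. rewrite (proj2 (Nat.ltb_lt l n) Hl). auto. Qed.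

Lemma borel_preimage (phi : R -> R) : (forall c, borel (fun x => phi x <= c)) ->
  forall B, borel B -> borel (fun x => B (phi x)).
Proof. intros Hphi B HB. induction HB.
  - apply Hphi.
  - apply borel_compl; auto.
  - apply (borel_cunion (fun n x => A n (phi x))); auto.
  - apply borel_ext with (fun x => A (phi x)); [auto|intros; apply H]. Qed.

Lemma borel_cell (x : nat -> R) l : borel (cell x l).
Proof. unfold cell. destruct l as [|l].
  apply borel_ext with (fun t => x O <= t /\ t <= x 1%nat). apply borel_cc.
  intros t; split. intros [H1 H2]; split; auto. intros [[[_ H]|[H _]] H2]; auto; lia.
  apply borel_ext with (fun t => x (S l) < t /\ t <= x (S (S l))). apply borel_and; [apply borel_gt|apply borel_le].
  intros t; split. intros [H1 H2]; split; auto. right; split; auto; lia. intros [[[H _]|[_ H]] H2]; auto. discriminate. Qed.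

Section Meas.
Variables (p : nat) (al be : R) (mu : mmeasure).
Hypothesis Hmu : is_matrix_measure p al be mu.

Lemma mm_psd B : borel B -> psd p (mu B).
Proof. apply Hmu. Qed.

Lemma ev_const (u : nat -> R) c N0 l : (forall N, (N >= N0)%nat -> u N = c) -> Un_cv u l -> l = c.
Proof. intros H Hl. apply UL_sequence with u; auto. intros eps He. exists N0. intros n Hn. rewrite H; auto.
  unfold Rdist. rewrite Rminus_diag, Rabs_R0; auto. Qed.

Lemma mm_empty i j : (i < p)%nat -> (j < p)%nat -> mu (fun _ => False) i j = 0.
Proof. intros Hi Hj. destruct Hmu as [_ [Hadd _]].
  pose proof (Hadd (fun _ _ => False) (fun _ => False) (fun _ => borel_empty) (fun n m x _ H _ => H) borel_empty) as H.
  assert (Hc : forall x:R, False <-> exists n:nat, False) by (intros; split; [tauto|intros [_ []]]).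
  specialize (H Hc i j Hi Hj). set (c := mu (fun _ => False) i j) in *.
  destruct (Req_dec c 0) as [E|E]; auto. exfalso.
  assert (Ha : 0 < Rabs c / 2) by (pose proof (Rabs_pos_lt c E); lra).
  destruct (H _ Ha) as [N HN]. specialize (HN (S N) ltac:(lia)). unfold Rdist in HN.
  rewrite sumR_const in HN. change (mu (fun _ : R => False) i j) with c in HN. replace (INR (S (S N)) * c - c) with (INR (S N) * c) in HN by (rewrite (S_INR (S N)); ring).
  rewrite Rabs_mult, Rabs_right in HN. 2: apply Rle_ge, pos_INR.
  assert (1 <= INR (S N)) by (rewrite S_INR; pose proof (pos_INR N); lra).
  pose proof (Rabs_pos c). nra. Qed.

Lemma mm_fin n (A : nat -> R -> Prop) C : (forall l, (l < n)%nat -> borel (A l)) ->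
  (forall l r x, (l < n)%nat -> (r < n)%nat -> l <> r -> A l x -> A r x -> False) ->
  borel C -> (forall x, C x <-> exists l, (l < n)%nat /\ A l x) ->
  forall i j, (i < p)%nat -> (j < p)%nat -> mu C i j = sumR n (fun l => mu (A l) i j).
Proof. intros HA Hd HC HCx i j Hi Hj. destruct Hmu as [_ [Hadd _]].
  set (F := fun l => if Nat.ltb l n then A l else fun _ : R => False).
  assert (HF : forall l, borel (F l)). intros l; unfold F; destruct (Nat.ltb l n) eqn:E; [apply HA; apply Nat.ltb_lt; auto|apply borel_empty].
  assert (HFd : forall l r x, l <> r -> F l x -> F r x -> False).
  { intros l r x Hlr. unfold F. destruct (Nat.ltb l n) eqn:E1; destruct (Nat.ltb r n) eqn:E2; try tauto.
    apply Hd; auto; apply Nat.ltb_lt; auto. }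
  assert (HCF : forall x, C x <-> exists l, F l x).
  { intros x; rewrite HCx; split. intros [l [Hl H]]. exists l; unfold F; rewrite (proj2 (Nat.ltb_lt l n) Hl); auto.
    intros [l H]. unfold F in H. destruct (Nat.ltb l n) eqn:E. exists l; split; auto; apply Nat.ltb_lt; auto. contradiction. }
  specialize (Hadd F C HF HFd HC HCF i j Hi Hj).
  refine (ev_const _ _ n _ _ Hadd).
  intros N HN. replace (S N) with (n + (S N - n))%nat by lia. rewrite sumR_split.
  rewrite (sumR_zero (S N - n)). rewrite Rplus_0_r. apply sumR_ext. intros l Hl. unfold F. rewrite (proj2 (Nat.ltb_lt l n) Hl); auto.
  intros l _. unfold F. rewrite (proj2 (Nat.ltb_ge (n + l) n)) by lia. apply mm_empty; auto. Qed.

Lemma mm_ext A B : borel A -> (forall x, A x <-> B x) -> forall i j, (i < p)%nat -> (j < p)%nat -> mu A i j = mu B i j.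
Proof. intros HA HAB i j Hi Hj. rewrite (mm_fin 1 (fun _ => A) B); auto.
  simpl; lra. intros; lia. apply borel_ext with A; auto.
  intros x; rewrite <- HAB; split; [intros H; exists O; split; auto| intros [_ [_ H]]; auto]. Qed.

Lemma mm_conc C : borel C -> forall i j, (i < p)%nat -> (j < p)%nat ->
  mu C i j = mu (fun x => C x /\ al <= x <= be) i j.
Proof. intros HC i j Hi Hj.
  rewrite (mm_fin 2 (fun l => match l with O => fun x => C x /\ al <= x <= be | _ => fun x => C x /\ ~ (al <= x <= be) end) C); auto.
  simpl. destruct Hmu as [_ [_ [Hc _]]]. rewrite (Hc (fun x => C x /\ ~ (al <= x <= be))); auto. lra.
  apply borel_and; auto. constructor; apply borel_cc. intros x [_ H]. lra.
  intros [|[|l]] Hl. apply borel_and; auto; apply borel_cc. apply borel_and; auto; constructor; apply borel_cc. lia.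
  intros [|[|l]] [|[|r]] x Hl Hr Hlr; simpl; try tauto; try lia.
  intros x; split. intros H. destruct (classic (al <= x <= be)). exists O; split; auto; lia. exists 1%nat; split; auto; lia.
  intros [[|[|l]] [Hl H]]; try tauto; lia. Qed.

Lemma mm_norm i j : (i < p)%nat -> (j < p)%nat -> mu (fun x => al <= x <= be) i j = idm i j.
Proof. intros. apply Hmu; auto. Qed.

Definition dcover (n : nat) (A : nat -> R -> Prop) : Prop :=
  (forall l, (l < n)%nat -> borel (A l)) /\
  (forall t, al <= t <= be -> exists l, (l < n)%nat /\ A l t) /\
  (forall t l r, al <= t <= be -> (l < n)%nat -> (r < n)%nat -> A l t -> A r t -> l = r).

Lemma mm_dcover_sub n A C : dcover n A -> borel C -> forall i j, (i < p)%nat -> (j < p)%nat ->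
  mu C i j = sumR n (fun l => mu (fun x => C x /\ A l x) i j).
Proof. intros [HA [Hc Hd]] HC i j Hi Hj. rewrite mm_conc; auto.
  rewrite (mm_fin n (fun l x => (C x /\ A l x) /\ al <= x <= be)); auto.
  apply sumR_ext; intros l Hl. symmetry; apply mm_conc; auto. apply borel_and; auto.
  intros l Hl. apply borel_and; [apply borel_and; auto| apply borel_cc].
  intros l r x Hl Hr Hlr [[_ H1] H3] [[_ H2] _]. apply Hlr; eapply Hd; eauto.
  apply borel_and; auto; apply borel_cc.
  intros x; split. intros [H1 H2]. destruct (Hc x H2) as [l [Hl H]]. exists l; auto.
  intros [l [_ [[H1 _] H2]]]; auto. Qed.

Lemma mm_dcover n A : dcover n A -> forall i j, (i < p)%nat -> (j < p)%nat ->
  sumR n (fun l => mu (A l) i j) = idm i j.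
Proof. intros HD i j Hi Hj. rewrite <- mm_norm; auto. rewrite (mm_dcover_sub n A); auto. 2: apply borel_cc.
  apply sumR_ext; intros l Hl. rewrite mm_conc; auto. apply mm_ext; auto.
  apply borel_and; [apply HD; auto|apply borel_cc]. intros x; tauto. apply HD; auto. Qed.
End Meas.

Definition ucont (al be : R) (f : R -> R) : Prop :=
  forall eps, 0 < eps -> exists d, 0 < d /\ forall s t, al <= s <= be -> al <= t <= be ->
    Rabs (s - t) <= d -> Rabs (f s - f t) <= eps.

Definition gpart (al be d : R) (n : nat) (A : nat -> R -> Prop) (tau : nat -> R) : Prop :=
  dcover al be n A /\ (forall l, (l < n)%nat -> al <= tau l <= be) /\
  (forall l t, (l < n)%nat -> al <= t <= be -> A l t -> Rabs (t - tau l) <= d).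

Definition gsum (p : nat) (mu : mmeasure) (n : nat) (A : nat -> R -> Prop) (c : nat -> R) (i j : nat) : R :=
  sumR n (fun l => c l * mu (A l) i j).

Section K.
Variables (p : nat) (al be : R) (mu : mmeasure).
Hypothesis Hmu : is_matrix_measure p al be mu.

Lemma pair_bound E k eps i j : borel E -> 0 <= eps -> (i < p)%nat -> (j < p)%nat ->
  ((exists t, al <= t <= be /\ E t) -> Rabs k <= eps) ->
  Rabs (k * mu E i j) <= eps * ((mu E i i + mu E j j) / 2).
Proof. intros HE He Hi Hj Hk.
  assert (Hii := psd_diag p (mu E) i (mm_psd p al be mu Hmu E HE) Hi).
  assert (Hjj := psd_diag p (mu E) j (mm_psd p al be mu Hmu E HE) Hj).
  destruct (classic (exists t, al <= t <= be /\ E t)) as [Ex|NEx].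
  - rewrite Rabs_mult. specialize (Hk Ex). pose proof (psd_entry p (mu E) i j (mm_psd p al be mu Hmu E HE) Hi Hj).
    apply Rmult_le_compat; auto; apply Rabs_pos.
  - rewrite (mm_conc p al be mu Hmu E HE i j Hi Hj).
    rewrite (mm_ext p al be mu Hmu _ (fun _ => False)); auto. rewrite mm_empty with (1 := Hmu); auto.
    rewrite Rmult_0_r, Rabs_R0. apply Rmult_le_pos; lra.
    apply borel_and; auto; apply borel_cc. intros x; split; [|tauto]. intros [H1 H2]; apply NEx; eauto. Qed.

Lemma coef_lemma n A c c' eta i j : dcover al be n A -> (i < p)%nat -> (j < p)%nat -> 0 <= eta ->
  (forall l, (l < n)%nat -> (exists t, al <= t <= be /\ A l t) -> Rabs (c l - c' l) <= eta) ->
  Rabs (gsum p mu n A c i j - gsum p mu n A c' i j) <= eta.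
Proof. intros HD Hi Hj He H. unfold gsum. rewrite <- sumR_minus.
  eapply Rle_trans. apply sumR_abs.
  eapply Rle_trans. apply sumR_le with (g := fun l => eta * ((mu (A l) i i + mu (A l) j j) / 2)).
  intros l Hl. replace (c l * mu (A l) i j - c' l * mu (A l) i j) with ((c l - c' l) * mu (A l) i j) by ring.
  apply pair_bound; auto. apply HD; auto.
  right. rewrite (sumR_ext n _ (fun l => eta/2 * mu (A l) i i + eta/2 * mu (A l) j j)) by (intros; field).
  rewrite sumR_plus, !sumR_scal, !(mm_dcover p al be mu Hmu n A HD); auto. unfold idm. rewrite !Nat.eqb_refl. field. Qed.

Lemma lemmaK d n A tau m B eta f eps i j : gpart al be d n A tau -> gpart al be d m B eta -> 0 <= eps ->
  (forall s t, al <= s <= be -> al <= t <= be -> Rabs (s - t) <= 2 * d -> Rabs (f s - f t) <= eps) ->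
  (i < p)%nat -> (j < p)%nat ->
  Rabs (gsum p mu n A (fun l => f (tau l)) i j - gsum p mu m B (fun r => f (eta r)) i j) <= eps.
Proof. intros [HA [HtA HfA]] [HB [HtB HfB]] He Hf Hi Hj. unfold gsum.
  set (E := fun l r x => A l x /\ B r x).
  assert (HE : forall l r, (l < n)%nat -> (r < m)%nat -> borel (E l r)) by (intros; apply borel_and; [apply HA|apply HB]; auto).
  assert (X1 : sumR n (fun l => f (tau l) * mu (A l) i j) = sumR n (fun l => sumR m (fun r => f (tau l) * mu (E l r) i j))).
  { apply sumR_ext; intros l Hl. rewrite sumR_scal. f_equal. apply (mm_dcover_sub p al be mu Hmu m B (A l) HB); auto. apply HA; auto. }
  assert (X2 : sumR m (fun r => f (eta r) * mu (B r) i j) = sumR n (fun l => sumR m (fun r => f (eta r) * mu (E l r) i j))).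
  { rewrite sumR_swap. apply sumR_ext; intros r Hr. rewrite sumR_scal. f_equal.
    rewrite (mm_dcover_sub p al be mu Hmu n A (B r) HA); auto. 2: apply HB; auto.
    apply sumR_ext; intros l Hl. apply mm_ext with (1 := Hmu); auto. apply borel_and; [apply HB|apply HA]; auto.
    intros x; unfold E; tauto. }
  rewrite X1, X2, <- sumR_minus.
  eapply Rle_trans. apply sumR_abs.
  eapply Rle_trans. apply sumR_le with (g := fun l => sumR m (fun r => eps * ((mu (E l r) i i + mu (E l r) j j) / 2))).
  { intros l Hl. rewrite <- sumR_minus. eapply Rle_trans. apply sumR_abs. apply sumR_le. intros r Hr.
    replace (f (tau l) * mu (E l r) i j - f (eta r) * mu (E l r) i j) with ((f (tau l) - f (eta r)) * mu (E l r) i j) by ring.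
    apply pair_bound; auto. intros [t [Ht [H1 H2]]]. apply Hf; auto.
    pose proof (HfA l t Hl Ht H1). pose proof (HfB r t Hr Ht H2).
    replace (tau l - eta r) with ((t - eta r) - (t - tau l)) by ring.
    eapply Rle_trans. apply Rabs_triang. rewrite Rabs_Ropp. lra. }
  assert (S1 : forall k, (k < p)%nat -> sumR n (fun l => sumR m (fun r => mu (E l r) k k)) = 1).
  { intros k Hk. transitivity (sumR n (fun l => mu (A l) k k)).
    apply sumR_ext; intros l Hl. symmetry. apply (mm_dcover_sub p al be mu Hmu m B (A l) HB); auto. apply HA; auto.
    rewrite (mm_dcover p al be mu Hmu n A HA); auto. unfold idm; rewrite Nat.eqb_refl; auto. }
  right. rewrite (sumR_ext n _ (fun l => eps / 2 * sumR m (fun r => mu (E l r) i i) + eps / 2 * sumR m (fun r => mu (E l r) j j))).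
  rewrite sumR_plus, !sumR_scal, !S1; auto. field.
  intros l Hl. rewrite <- !sumR_scal, <- sumR_plus. apply sumR_ext; intros; field. Qed.

End K.

Definition spart (al be d : R) (n : nat) (x xi : nat -> R) : Prop :=
  (0 < n)%nat /\ x O = al /\ x n = be /\
  forall l, (l < n)%nat -> x l < x (S l) /\ x (S l) - x l < d /\ x l <= xi l <= x (S l).

Lemma int_spart p mu a b f M : is_integral p mu a b f M <->
  forall eps, 0 < eps -> exists d, 0 < d /\ forall n x xi, spart a b d n x xi ->
    forall i j, (i < p)%nat -> (j < p)%nat -> Rabs (gsum p mu n (cell x) (fun l => f (xi l)) i j - M i j) < eps.
Proof. split.
  - intros H eps He. destruct (H eps He) as [d [Hd H']]. exists d; split; auto.
    intros n x xi [H1 [H2 [H3 H4]]]. apply H'; auto.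
  - intros H eps He. destruct (H eps He) as [d [Hd H']]. exists d; split; auto.
    intros n x xi H1 H2 H3 H4. apply H'. repeat split; auto; apply H4; auto. Qed.

Lemma spart_mono al be d n x xi : spart al be d n x xi -> forall l m, (l <= m <= n)%nat -> x l <= x m.
Proof. intros [_ [_ [_ H]]] l m [H1 H2]. induction m. replace l with O by lia; lra.
  destruct (Nat.eq_dec l (S m)). subst; lra. assert (x m < x (S m)) by (apply H; lia).
  assert (x l <= x m) by (apply IHm; lia). lra. Qed.

Lemma spart_weaken al be d d' n x xi : spart al be d n x xi -> d <= d' -> spart al be d' n x xi.
Proof. intros [H1 [H2 [H3 H4]]] Hd. repeat split; auto; try apply H4; auto.
  destruct (H4 l H) as [_ [H5 _]]; lra. Qed.

Lemma spart_gpart al be d n x xi : spart al be d n x xi -> gpart al be d n (cell x) xi.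
Proof. intros HS. pose proof (spart_mono _ _ _ _ _ _ HS) as Hm. destruct HS as [Hn [H0 [Hend H]]].
  split; [split; [|split]|split].
  - intros; apply borel_cell.
  - intros t Ht. assert (K : forall m, (1 <= m <= n)%nat -> t <= x m -> exists l, (l < m)%nat /\ cell x l t).
    { intros m. induction m; intros Hm1 Htm. lia. destruct (Nat.eq_dec m O). subst. exists O; split; [lia|].
      unfold cell; split; [left; split; auto; lra| auto].
      destruct (Rle_dec t (x m)). destruct IHm as [l [Hl Hc]]; auto; try lia. exists l; split; auto.
      exists m; split; auto. unfold cell; split; auto. right; split; lia || lra. }
    destruct (K n ltac:(lia) ltac:(lra)) as [l [Hl Hc]]. exists l; auto.
  - intros t l r Ht Hl Hr [C1 C2] [D1 D2].
    destruct (Nat.lt_trichotomy l r) as [E|[E|E]]; auto; exfalso.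
    destruct D1 as [[D1 _]|[_ D1]]. lia. assert (x (S l) <= x r) by (apply Hm; lia). lra.
    destruct C1 as [[C1 _]|[_ C1]]. lia. assert (x (S r) <= x l) by (apply Hm; lia). lra.
  - intros l Hl. destruct (H l Hl) as [_ [_ [A1 A2]]]. assert (x O <= x l) by (apply Hm; lia).
    assert (x (S l) <= x n) by (apply Hm; lia). lra.
  - intros l t Hl Ht [C1 C2]. destruct (H l Hl) as [_ [A1 [A2 A3]]].
    assert (x l <= t) by (destruct C1 as [[E C]|[_ C]]; [subst; auto|lra]). apply Rabs_le; lra. Qed.

Definition ux (al be : R) (N : nat) (l : nat) : R := al + INR l * ((be - al) / INR N).

Lemma ux_spart al be d N : al < be -> (0 < N)%nat -> (be - al) / INR N < d -> spart al be d N (ux al be N) (ux al be N).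
Proof. intros Hab HN Hd. assert (0 < INR N) by (apply lt_0_INR; auto).
  assert (0 < (be - al) / INR N) by (apply Rdiv_lt_0_compat; lra).
  unfold ux. repeat split; auto.
  - simpl; ring.
  - field; lra.
  - rewrite S_INR; lra.
  - rewrite S_INR; lra.
  - lra.
  - rewrite S_INR; lra. Qed.

Lemma fine_N al be d : al < be -> 0 < d -> exists N0, forall N, (N >= N0)%nat -> (0 < N)%nat /\ (be - al) / INR N < d.
Proof. intros Hab Hd. destruct (archimed_cor1 (d / (be - al))) as [N0 [H1 H2]]. apply Rdiv_lt_0_compat; lra.
  exists N0. intros N HN. split. lia. assert (0 < INR N0) by (apply lt_0_INR; auto).
  assert (INR N0 <= INR N) by (apply le_INR; auto).
  assert (/ INR N <= / INR N0) by (apply Rinv_le_contravar; lra).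
  unfold Rdiv. apply Rle_lt_trans with ((be - al) * / INR N0). apply Rmult_le_compat_l; lra.
  apply Rmult_lt_reg_l with (/ (be - al)). apply Rinv_0_lt_compat; lra.
  rewrite <- Rmult_assoc, Rinv_l by lra. unfold Rdiv in H1. lra. Qed.

Lemma small_zero x : (forall eps, 0 < eps -> Rabs x < eps) -> x = 0.
Proof. intros H. destruct (Req_dec x 0); auto. exfalso. pose proof (Rabs_pos_lt x H0).
  specialize (H (Rabs x) H1). lra. Qed.

Lemma int_unique p mu al be f M M' : al < be -> is_integral p mu al be f M -> is_integral p mu al be f M' -> meq p M M'.
Proof. intros Hab H1 H2 i j Hi Hj. apply Rminus_diag_uniq. apply small_zero. intros eps He.
  destruct (proj1 (int_spart _ _ _ _ _ _) H1 (eps/2) ltac:(lra)) as [d1 [Hd1 K1]].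
  destruct (proj1 (int_spart _ _ _ _ _ _) H2 (eps/2) ltac:(lra)) as [d2 [Hd2 K2]].
  destruct (fine_N al be (Rmin d1 d2) Hab) as [N HN]. apply Rmin_pos; auto.
  destruct (HN N (le_n N)) as [HN0 HN1].
  pose proof (ux_spart al be _ N Hab HN0 HN1) as HS.
  specialize (K1 _ _ _ (spart_weaken _ _ _ d1 _ _ _ HS (Rmin_l _ _)) i j Hi Hj).
  specialize (K2 _ _ _ (spart_weaken _ _ _ d2 _ _ _ HS (Rmin_r _ _)) i j Hi Hj).
  set (s := gsum p mu N (cell (ux al be N)) (fun l => f (ux al be N l)) i j) in *.
  replace (M i j - M' i j) with ((s - M' i j) - (s - M i j)) by ring.
  eapply Rle_lt_trans. apply Rabs_triang. rewrite Rabs_Ropp. lra. Qed.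

Section G.
Variables (p : nat) (al be : R) (mu : mmeasure).
Hypothesis Hmu : is_matrix_measure p al be mu.
Hypothesis Hab : al < be.

Lemma lemmaG f M : is_integral p mu al be f M -> ucont al be f ->
  forall eps, 0 < eps -> exists d, 0 < d /\ forall n A tau, gpart al be d n A tau ->
    forall i j, (i < p)%nat -> (j < p)%nat -> Rabs (gsum p mu n A (fun l => f (tau l)) i j - M i j) <= eps.
Proof. intros HI Hu eps He.
  destruct (proj1 (int_spart _ _ _ _ _ _) HI (eps/2) ltac:(lra)) as [d1 [Hd1 K1]].
  destruct (Hu (eps/2) ltac:(lra)) as [d2 [Hd2 U2]].
  set (d := Rmin d1 d2 / 2). assert (Hd : 0 < d) by (unfold d; pose proof (Rmin_pos d1 d2 Hd1 Hd2); lra).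
  assert (Hd1' : d <= d1) by (unfold d; pose proof (Rmin_l d1 d2); pose proof (Rmin_pos d1 d2 Hd1 Hd2); lra).
  assert (Hd2' : 2 * d <= d2) by (unfold d; pose proof (Rmin_r d1 d2); lra).
  exists d; split; auto. intros n A tau HG i j Hi Hj.
  destruct (fine_N al be d Hab Hd) as [N HN]. destruct (HN N (le_n N)) as [HN0 HN1].
  pose proof (ux_spart al be _ N Hab HN0 HN1) as HS.
  specialize (K1 _ _ _ (spart_weaken _ _ _ d1 _ _ _ HS Hd1') i j Hi Hj).
  pose proof (lemmaK p al be mu Hmu d n A tau N (cell (ux al be N)) (ux al be N) f (eps/2) i j HG (spart_gpart _ _ _ _ _ _ HS)
    ltac:(lra) ltac:(intros; apply U2; auto; lra) Hi Hj).
  set (s := gsum p mu N (cell (ux al be N)) (fun l => f (ux al be N l)) i j) in *.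
  set (g := gsum p mu n A (fun l => f (tau l)) i j) in *.
  replace (g - M i j) with ((g - s) + (s - M i j)) by ring.
  eapply Rle_trans. apply Rabs_triang. lra. Qed.

Lemma int_exists f : ucont al be f -> exists M, is_integral p mu al be f M.
Proof. intros Hu.
  set (s := fun N i j => gsum p mu (S N) (cell (ux al be (S N))) (fun l => f (ux al be (S N) l)) i j).
  assert (Cau : forall eps, 0 < eps -> exists N0, forall n m, (n >= N0)%nat -> (m >= N0)%nat ->
      forall i j, (i < p)%nat -> (j < p)%nat -> Rabs (s n i j - s m i j) <= eps).
  { intros eps He. destruct (Hu eps He) as [d2 [Hd2 U2]]. destruct (fine_N al be (d2/2) Hab ltac:(lra)) as [N0 HN].
    exists N0. intros n m Hn Hm i j Hi Hj. unfold s.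
    destruct (HN (S n) ltac:(lia)) as [A1 A2]. destruct (HN (S m) ltac:(lia)) as [B1 B2].
    apply (lemmaK p al be mu Hmu (d2/2)); auto; try lra.
    apply spart_gpart, ux_spart; auto. apply spart_gpart, ux_spart; auto.
    intros; apply U2; auto; lra. }
  assert (Hex : forall i j, exists l, (i < p)%nat -> (j < p)%nat -> Un_cv (fun N => s N i j) l).
  { intros i j. destruct (Compare_dec.lt_dec i p) as [Hi|Hi]; [destruct (Compare_dec.lt_dec j p) as [Hj|Hj]|].
    - assert (C : Cauchy_crit (fun N => s N i j)).
      { intros eps He. destruct (Cau (eps/2) ltac:(lra)) as [N0 H]. exists N0. intros n m Hn Hm.
        unfold Rdist. specialize (H n m Hn Hm i j Hi Hj). lra. }
      destruct (R_complete _ C) as [l Hl]. exists l; auto.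
    - exists 0; intros; contradiction.
    - exists 0; intros; contradiction. }
  set (M := fun i j => proj1_sig (constructive_indefinite_description _ (Hex i j))).
  assert (HM : forall i j, (i < p)%nat -> (j < p)%nat -> Un_cv (fun N => s N i j) (M i j)).
  { intros i j Hi Hj. unfold M. destruct (constructive_indefinite_description _ (Hex i j)); simpl; auto. }
  exists M. apply int_spart. intros eps He.
  destruct (Hu (eps/2) ltac:(lra)) as [d2 [Hd2 U2]].
  exists (d2/2); split; [lra|]. intros n x xi HS i j Hi Hj.
  destruct (HM i j Hi Hj (eps/2) ltac:(lra)) as [N1 HN1].
  destruct (fine_N al be (d2/2) Hab ltac:(lra)) as [N0 HN0].
  set (N := Nat.max N0 N1). specialize (HN1 N ltac:(lia)). unfold Rdist in HN1.
  destruct (HN0 (S N) ltac:(lia)) as [A1 A2].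
  pose proof (lemmaK p al be mu Hmu (d2/2) n (cell x) xi (S N) (cell (ux al be (S N))) (ux al be (S N)) f (eps/2) i j
     (spart_gpart _ _ _ _ _ _ HS) (spart_gpart _ _ _ _ _ _ (ux_spart _ _ _ _ Hab A1 A2)) ltac:(lra)
     ltac:(intros; apply U2; auto; lra) Hi Hj) as K.
  fold (s N i j) in K. set (g := gsum p mu n (cell x) (fun l => f (xi l)) i j) in *.
  replace (g - M i j) with ((g - s N i j) + (s N i j - M i j)) by ring.
  eapply Rle_lt_trans. apply Rabs_triang. lra. Qed.

Lemma int_one : is_integral p mu al be (fun _ => 1) idm.
Proof. apply int_spart. intros eps He. exists 1; split; [lra|]. intros n x xi HS i j Hi Hj.
  unfold gsum. rewrite (sumR_ext n _ (fun l => mu (cell x l) i j)) by (intros; ring).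
  rewrite (mm_dcover p al be mu Hmu n (cell x)); auto. rewrite Rminus_diag, Rabs_R0; auto.
  apply (spart_gpart _ _ _ _ _ _ HS). Qed.

End G.

Lemma int_plus p mu a b f g M N : is_integral p mu a b f M -> is_integral p mu a b g N ->
  is_integral p mu a b (fun x => f x + g x) (fun i j => M i j + N i j).
Proof. intros H1 H2 eps He. destruct (H1 (eps/2) ltac:(lra)) as [d1 [Hd1 K1]].
  destruct (H2 (eps/2) ltac:(lra)) as [d2 [Hd2 K2]]. exists (Rmin d1 d2); split. apply Rmin_pos; auto.
  intros n x xi Hn H0 Hb Hx i j Hi Hj.
  assert (W1 : forall l, (l < n)%nat -> x l < x (S l) /\ x (S l) - x l < d1 /\ x l <= xi l <= x (S l)).
  { intros l Hl; destruct (Hx l Hl) as [A [B C]]; repeat split; auto; pose proof (Rmin_l d1 d2); lra. }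
  assert (W2 : forall l, (l < n)%nat -> x l < x (S l) /\ x (S l) - x l < d2 /\ x l <= xi l <= x (S l)).
  { intros l Hl; destruct (Hx l Hl) as [A [B C]]; repeat split; auto; pose proof (Rmin_r d1 d2); lra. }
  specialize (K1 n x xi Hn H0 Hb W1 i j Hi Hj). specialize (K2 n x xi Hn H0 Hb W2 i j Hi Hj).
  rewrite (sumR_ext n _ (fun l => f (xi l) * mu (cell x l) i j + g (xi l) * mu (cell x l) i j)) by (intros; ring).
  rewrite sumR_plus.
  set (s1 := sumR n (fun l => f (xi l) * mu (cell x l) i j)) in *.
  set (s2 := sumR n (fun l => g (xi l) * mu (cell x l) i j)) in *.
  replace (s1 + s2 - (M i j + N i j)) with ((s1 - M i j) + (s2 - N i j)) by ring.
  eapply Rle_lt_trans. apply Rabs_triang. lra. Qed.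

Lemma int_scal p mu a b f M c : is_integral p mu a b f M ->
  is_integral p mu a b (fun x => c * f x) (fun i j => c * M i j).
Proof. intros H eps He. assert (Hc : 0 < Rabs c + 1) by (pose proof (Rabs_pos c); lra).
  destruct (H (eps / (Rabs c + 1))) as [d [Hd K]]. apply Rdiv_lt_0_compat; auto.
  exists d; split; auto. intros n x xi Hn H0 Hb Hx i j Hi Hj. specialize (K n x xi Hn H0 Hb Hx i j Hi Hj).
  rewrite (sumR_ext n _ (fun l => c * (f (xi l) * mu (cell x l) i j))) by (intros; ring).
  rewrite sumR_scal, <- Rmult_minus_distr_l, Rabs_mult.
  apply Rle_lt_trans with ((Rabs c + 1) * Rabs (sumR n (fun l => f (xi l) * mu (cell x l) i j) - M i j)).
  apply Rmult_le_compat_r. apply Rabs_pos. lra.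
  apply Rmult_lt_reg_l with (/ (Rabs c + 1)). apply Rinv_0_lt_compat; auto.
  rewrite <- Rmult_assoc, Rinv_l by lra. unfold Rdiv in K. lra. Qed.

Lemma int_fext p mu a b f g M : (forall x, a <= x <= b -> f x = g x) ->
  is_integral p mu a b f M -> is_integral p mu a b g M.
Proof. intros E H eps He. destruct (H eps He) as [d [Hd K]]. exists d; split; auto.
  intros n x xi Hn H0 Hb Hx i j Hi Hj. specialize (K n x xi Hn H0 Hb Hx i j Hi Hj).
  assert (HS : spart a b d n x xi) by (repeat split; auto; apply Hx; auto).
  destruct (spart_gpart _ _ _ _ _ _ HS) as [_ [Ht _]].
  rewrite (sumR_ext n _ (fun l => f (xi l) * mu (cell x l) i j)); auto.
  intros l Hl. rewrite E; auto. Qed.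

Lemma int_meq p mu a b f M M' : meq p M M' -> is_integral p mu a b f M -> is_integral p mu a b f M'.
Proof. intros E H eps He. destruct (H eps He) as [d [Hd K]]. exists d; split; auto.
  intros n x xi Hn H0 Hb Hx i j Hi Hj. rewrite <- E; auto. Qed.

Lemma int_mext p mu nu a b f M : (forall B, borel B -> meq p (mu B) (nu B)) ->
  is_integral p mu a b f M -> is_integral p nu a b f M.
Proof. intros E H eps He. destruct (H eps He) as [d [Hd K]]. exists d; split; auto.
  intros n x xi Hn H0 Hb Hx i j Hi Hj. specialize (K n x xi Hn H0 Hb Hx i j Hi Hj).
  rewrite (sumR_ext n _ (fun l => f (xi l) * mu (cell x l) i j)); auto.
  intros l Hl. rewrite E; auto. apply borel_cell. Qed.

Lemma int_zero p mu a b : is_integral p mu a b (fun _ => 0) (fun _ _ => 0).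
Proof. intros eps He. exists 1; split; [lra|]. intros. rewrite sumR_zero. rewrite Rminus_0_r, Rabs_R0; auto.
  intros; ring. Qed.

Lemma int_sum p mu a b m (h : nat -> R -> R) (Mk : nat -> Mat) :
  (forall k, (k < m)%nat -> is_integral p mu a b (h k) (Mk k)) ->
  is_integral p mu a b (fun x => sumR m (fun k => h k x)) (fun i j => sumR m (fun k => Mk k i j)).
Proof. induction m; intros H. simpl. apply int_zero.
  simpl. apply int_plus. apply IHm; intros; apply H; lia. apply H; lia. Qed.

Lemma int_mix p mu nu a b f M N c1 c2 : is_integral p mu a b f M -> is_integral p nu a b f N ->
  is_integral p (fun B i j => c1 * mu B i j + c2 * nu B i j) a b f (fun i j => c1 * M i j + c2 * N i j).
Proof. intros H1 H2. apply int_scal with (c := c1) in H1. apply int_scal with (c := c2) in H2.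
  intros eps He. destruct (H1 (eps/2) ltac:(lra)) as [d1 [Hd1 K1]].
  destruct (H2 (eps/2) ltac:(lra)) as [d2 [Hd2 K2]]. exists (Rmin d1 d2); split. apply Rmin_pos; auto.
  intros n x xi Hn H0 Hb Hx i j Hi Hj.
  assert (W1 : forall l, (l < n)%nat -> x l < x (S l) /\ x (S l) - x l < d1 /\ x l <= xi l <= x (S l)).
  { intros l Hl; destruct (Hx l Hl) as [A [B C]]; repeat split; auto; pose proof (Rmin_l d1 d2); lra. }
  assert (W2 : forall l, (l < n)%nat -> x l < x (S l) /\ x (S l) - x l < d2 /\ x l <= xi l <= x (S l)).
  { intros l Hl; destruct (Hx l Hl) as [A [B C]]; repeat split; auto; pose proof (Rmin_r d1 d2); lra. }
  specialize (K1 n x xi Hn H0 Hb W1 i j Hi Hj). specialize (K2 n x xi Hn H0 Hb W2 i j Hi Hj).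
  rewrite (sumR_ext n _ (fun l => c1 * f (xi l) * mu (cell x l) i j + c2 * f (xi l) * nu (cell x l) i j)) by (intros; ring).
  rewrite sumR_plus.
  set (s1 := sumR n (fun l => c1 * f (xi l) * mu (cell x l) i j)) in *.
  set (s2 := sumR n (fun l => c2 * f (xi l) * nu (cell x l) i j)) in *.
  replace (s1 + s2 - (c1 * M i j + c2 * N i j)) with ((s1 - c1 * M i j) + (s2 - c2 * N i j)) by ring.
  eapply Rle_lt_trans. apply Rabs_triang. lra. Qed.

Definition pf (phi : R -> R) (mu : mmeasure) : mmeasure := fun B => mu (fun x => B (phi x)).

Lemma pf_mm p al be a' b' mu phi : is_matrix_measure p al be mu ->
  (forall c, borel (fun x => phi x <= c)) -> (forall x, al <= x <= be -> a' <= phi x <= b') ->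
  is_matrix_measure p a' b' (pf phi mu).
Proof. intros Hmu Hb Hm. pose proof Hmu as [Hpsd [Hadd [Hc Hn]]]. unfold pf. split; [|split; [|split]].
  - intros B HB. apply Hpsd. apply borel_preimage; auto.
  - intros A C HA Hd HC HCx. apply (Hadd (fun n x => A n (phi x)) (fun x => C (phi x))); auto.
    intros; apply borel_preimage; auto. intros n m x; apply Hd. apply borel_preimage; auto.
  - intros B HB Hout. apply Hc. apply borel_preimage; auto. intros x Hx.
    destruct (Rle_dec al x); destruct (Rle_dec x be); try lra. specialize (Hm x ltac:(lra)). specialize (Hout _ Hx). lra.
  - intros i j Hi Hj. assert (HB1 : borel (fun x => a' <= phi x <= b')) by exact (borel_preimage phi Hb (fun y => a' <= y <= b') (borel_cc a' b')).
    rewrite (mm_conc p al be mu Hmu _ HB1 i j Hi Hj).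
    rewrite (mm_ext p al be mu Hmu _ (fun x => al <= x <= be)); auto.
    apply borel_and; auto; apply borel_cc.
    intros x; split. tauto. intros H; split; auto. Qed.

Section TR.
Variables (p : nat) (al be a' b' : R) (mu nu : mmeasure).
Hypothesis Hmu : is_matrix_measure p al be mu.
Hypothesis Hab : al < be.

Definition RH (f g : R -> R) : Prop :=
  forall d eta, 0 < d -> 0 < eta -> exists d', 0 < d' /\ forall n x xi, spart a' b' d' n x xi ->
    exists m A tau c, gpart al be d m A tau /\
      (forall l, (l < m)%nat -> (exists t, al <= t <= be /\ A l t) -> Rabs (c l - f (tau l)) <= eta) /\
      forall i j, (i < p)%nat -> (j < p)%nat -> gsum p nu n (cell x) (fun l => g (xi l)) i j = gsum p mu m A c i j.

Lemma transfer f g M : is_integral p mu al be f M -> ucont al be f -> RH f g -> is_integral p nu a' b' g M.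
Proof. intros HI Hu Hr. apply int_spart. intros eps He.
  destruct (lemmaG p al be mu Hmu Hab f M HI Hu (eps/2) ltac:(lra)) as [d [Hd HG]].
  destruct (Hr d (eps/4) Hd ltac:(lra)) as [d' [Hd' HR]]. exists d'; split; auto.
  intros n x xi HS i j Hi Hj. destruct (HR n x xi HS) as [m [A [tau [c [HP [Hc HE]]]]]].
  rewrite HE; auto. pose proof (HG m A tau HP i j Hi Hj).
  pose proof (coef_lemma p al be mu Hmu m A c (fun l => f (tau l)) (eps/4) i j (proj1 HP) Hi Hj ltac:(lra) Hc).
  set (g1 := gsum p mu m A c i j) in *. set (g2 := gsum p mu m A (fun l => f (tau l)) i j) in *.
  replace (g1 - M i j) with ((g1 - g2) + (g2 - M i j)) by ring.
  eapply Rle_lt_trans. apply Rabs_triang. lra. Qed.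
End TR.

Lemma RH1 p al be a' b' mu phi psi f g :
  (forall c, borel (fun x => phi x <= c)) -> (forall t, al <= t <= be -> a' <= phi t <= b') ->
  (forall y, a' <= y <= b' -> al <= psi y <= be) ->
  (forall d eta, 0 < d -> 0 < eta -> exists d', 0 < d' /\ forall y t, a' <= y <= b' -> al <= t <= be ->
     Rabs (phi t - y) <= d' -> Rabs (t - psi y) <= d /\ Rabs (g y - f (psi y)) <= eta) ->
  RH p al be a' b' mu (pf phi mu) f g.
Proof. intros Hb Hm Hpsi Happ d eta Hd He. destruct (Happ d eta Hd He) as [d' [Hd' Ha]].
  exists d'; split; auto. intros n x xi HS. destruct (spart_gpart _ _ _ _ _ _ HS) as [[HB [Hc Hdis]] [Ht Hf]].
  exists n, (fun l t => cell x l (phi t)), (fun l => psi (xi l)), (fun l => g (xi l)).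
  split; [split; [split; [|split]|split]|split].
  - intros l Hl. apply borel_preimage; auto.
  - intros t Htt. apply Hc; auto.
  - intros t l r Htt Hl Hr H1 H2. eapply Hdis; eauto.
  - intros l Hl; apply Hpsi; auto.
  - intros l t Hl Htt Hc1. apply (Ha (xi l) t); auto.
  - intros l Hl [t [Htt Hc1]]. apply (Ha (xi l) t); auto.
  - intros; reflexivity. Qed.

Lemma affine_borel s c0 : s <> 0 -> forall c, borel (fun x => s * x + c0 <= c).
Proof. intros Hs c. set (q := (c - c0) / s). assert (Hq : s * q = c - c0) by (unfold q; field; auto).
  destruct (Rlt_dec 0 s).
  apply borel_ext with (fun x => x <= q). constructor. intros x. split; intros H; nra.
  apply borel_ext with (fun x => q <= x). apply borel_ge. intros x. split; intros H; nra. Qed.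

Lemma int_affine p al be a' b' mu s c0 g M : is_matrix_measure p al be mu -> al < be -> s <> 0 ->
  (forall t, al <= t <= be -> a' <= s * t + c0 <= b') ->
  (forall y, a' <= y <= b' -> al <= (y - c0) / s <= be) ->
  is_integral p mu al be (fun t => g (s * t + c0)) M -> ucont al be (fun t => g (s * t + c0)) ->
  is_integral p (pf (fun t => s * t + c0) mu) a' b' g M.
Proof. intros Hmu Hab Hs Hm Hpsi HI Hu. eapply transfer; eauto.
  apply RH1 with (psi := fun y => (y - c0) / s); auto. apply affine_borel; auto.
  intros d eta Hd He. exists (d * Rabs s); split. apply Rmult_lt_0_compat; auto. apply Rabs_pos_lt; auto.
  intros y t Hy Ht Hd'. split.
  - replace (t - (y - c0) / s) with ((s * t + c0 - y) / s) by (field; auto).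
    unfold Rdiv. rewrite Rabs_mult, Rabs_inv. apply Rmult_le_reg_r with (Rabs s). apply Rabs_pos_lt; auto.
    rewrite Rmult_assoc, Rinv_l. lra. apply Rabs_no_R0; auto.
  - replace (s * ((y - c0) / s) + c0) with y by (field; auto). rewrite Rminus_diag, Rabs_R0; lra. Qed.

Lemma lip_ucont al be f L : 0 <= L -> (forall s t, al <= s <= be -> al <= t <= be -> Rabs (f s - f t) <= L * Rabs (s - t)) ->
  ucont al be f.
Proof. intros HL H eps He. exists (eps / (L + 1)); split. apply Rdiv_lt_0_compat; lra.
  intros s t Hs Ht Hst. eapply Rle_trans. apply H; auto.
  apply Rle_trans with ((L+1) * (eps / (L + 1))). apply Rmult_le_compat; try lra. apply Rabs_pos.
  right; field; lra. Qed.

Lemma pow_lip k R x y : Rabs x <= R -> Rabs y <= R -> Rabs (x ^ k - y ^ k) <= INR k * R ^ (k - 1) * Rabs (x - y).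
Proof. intros Hx Hy. assert (HR : 0 <= R) by (pose proof (Rabs_pos x); lra). induction k.
  simpl. rewrite Rminus_diag, Rabs_R0. lra.
  replace (x ^ S k - y ^ S k) with (x * (x ^ k - y ^ k) + y ^ k * (x - y)) by (simpl; ring).
  eapply Rle_trans. apply Rabs_triang. rewrite !Rabs_mult.
  assert (Rabs (y ^ k) <= R ^ k) by (rewrite <- RPow_abs; apply pow_incr; split; auto; apply Rabs_pos).
  assert (0 <= Rabs (x ^ k - y ^ k)) by apply Rabs_pos. assert (0 <= Rabs (x - y)) by apply Rabs_pos.
  destruct k.
  - simpl. simpl in *. rewrite Rminus_diag, Rabs_R0. rewrite Rabs_R1. lra.
  - replace (S (S k) - 1)%nat with (S k) by lia. replace (S k - 1)%nat with k in IHk by lia.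
    rewrite S_INR. simpl pow. simpl pow in H.
    apply Rle_trans with (R * (INR (S k) * R ^ k * Rabs (x - y)) + R * R ^ k * Rabs (x - y)).
    apply Rplus_le_compat. apply Rmult_le_compat; auto. apply Rabs_pos. apply Rmult_le_compat_r; auto.
    rewrite S_INR. right; ring. Qed.

Lemma bound_abs al be s : al <= s <= be -> Rabs s <= Rabs al + Rabs be.
Proof. intros H. unfold Rabs; repeat destruct Rcase_abs; lra. Qed.

Lemma ucont_pow al be k : ucont al be (fun x => x ^ k).
Proof. set (R := Rabs al + Rabs be). apply lip_ucont with (INR k * R ^ (k - 1)).
  apply Rmult_le_pos. apply pos_INR. apply pow_le. unfold R; pose proof (Rabs_pos al); pose proof (Rabs_pos be); lra.
  intros s t Hs Ht. apply pow_lip; unfold R; apply bound_abs; auto. Qed.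

Lemma ucont_comp_aff al be s c0 (g : R -> R) : (forall a b, ucont a b g) -> ucont al be (fun t => g (s * t + c0)).
Proof. intros Hg eps He. set (R := Rabs s * (Rabs al + Rabs be) + Rabs c0).
  destruct (Hg (-R) R eps He) as [d [Hd H]]. exists (d / (Rabs s + 1)); split. apply Rdiv_lt_0_compat; auto. pose proof (Rabs_pos s); lra.
  assert (Bd : forall t, al <= t <= be -> - R <= s * t + c0 <= R).
  { intros t Ht. cut (Rabs (s * t + c0) <= R). unfold Rabs; destruct Rcase_abs; intros; lra. unfold R. eapply Rle_trans. apply Rabs_triang. rewrite Rabs_mult.
    apply Rplus_le_compat_r. apply Rmult_le_compat_l. apply Rabs_pos. apply bound_abs; auto. }
  intros a b Ha Hb Hab. apply H; auto. replace (s * a + c0 - (s * b + c0)) with (s * (a - b)) by ring.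
  rewrite Rabs_mult. apply Rle_trans with ((Rabs s + 1) * (d / (Rabs s + 1))).
  apply Rmult_le_compat; try apply Rabs_pos; lra. right; field. pose proof (Rabs_pos s); lra. Qed.

Definition affc (s c0 : R) (j i : nat) : R := C j i * s ^ i * c0 ^ (j - i).
Definition AM (s c0 : R) (j : nat) (T : nat -> Mat) : Mat :=
  fun a b => sumR (S j) (fun i => affc s c0 j i * T i a b).

Lemma aff_binom s c0 j t : (s * t + c0) ^ j = sumR (S j) (fun i => affc s c0 j i * t ^ i).
Proof. rewrite binomial, sumR_f_R0. apply sumR_ext; intros i Hi. unfold affc. rewrite Rpow_mult_distr. ring. Qed.

Lemma int_aff_poly p mu a b s c0 j T : (forall i, (i <= j)%nat -> is_integral p mu a b (fun t => t ^ i) (T i)) ->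
  is_integral p mu a b (fun t => (s * t + c0) ^ j) (AM s c0 j T).
Proof. intros H. apply int_fext with (fun t => sumR (S j) (fun i => affc s c0 j i * t ^ i)).
  intros; symmetry; apply aff_binom. unfold AM. apply int_sum with (h := fun i t => affc s c0 j i * t ^ i)
   (Mk := fun i a b => affc s c0 j i * T i a b). intros k Hk. apply int_scal. apply H; lia. Qed.

Lemma AM_meq p s c0 j T T' : (forall i, (i <= j)%nat -> meq p (T i) (T' i)) -> meq p (AM s c0 j T) (AM s c0 j T').
Proof. intros H a b Ha Hb. unfold AM. apply sumR_ext; intros i Hi. rewrite H; auto; lia. Qed.

Lemma C_nn j : C j j = 1.
Proof. unfold C. rewrite Nat.sub_diag. simpl (Factorial.fact 0). rewrite Rmult_1_r. field. apply INR_fact_neq_0. Qed.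

Lemma AM_top s c0 j T a b : AM s c0 j T a b = s ^ j * T j a b + sumR j (fun i => affc s c0 j i * T i a b).
Proof. unfold AM. simpl. unfold affc at 2. rewrite C_nn, Nat.sub_diag. simpl. ring. Qed.

Lemma mom_affine p al be a' b' mu s c0 j T : is_matrix_measure p al be mu -> al < be -> s <> 0 ->
  (forall t, al <= t <= be -> a' <= s * t + c0 <= b') ->
  (forall y, a' <= y <= b' -> al <= (y - c0) / s <= be) ->
  (forall i, (i <= j)%nat -> is_moment p mu al be i (T i)) ->
  is_moment p (pf (fun t => s * t + c0) mu) a' b' j (AM s c0 j T).
Proof. intros. unfold is_moment. apply (int_affine p al be a' b' mu s c0 (fun y => y ^ j)); try assumption.
  apply int_aff_poly; auto. apply (ucont_comp_aff al be s c0 (fun y => y ^ j)). intros; apply ucont_pow. Qed.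

Lemma int_sym p mu a b f M : is_matrix_measure p a b mu -> a < b -> is_integral p mu a b f M -> msym p M.
Proof. intros Hmu Hab H i j Hi Hj. apply Rminus_diag_uniq. apply small_zero. intros eps He.
  destruct (H (eps/2) ltac:(lra)) as [d [Hd K]].
  destruct (fine_N a b d Hab Hd) as [N HN]. destruct (HN N (le_n N)) as [HN0 HN1].
  destruct (ux_spart a b d N Hab HN0 HN1) as [A1 [A2 [A3 A4]]].
  pose proof (K N _ _ A1 A2 A3 A4 i j Hi Hj). pose proof (K N _ _ A1 A2 A3 A4 j i Hj Hi).
  rewrite (sumR_ext N (fun l => f (ux a b N l) * mu (cell (ux a b N) l) j i) (fun l => f (ux a b N l) * mu (cell (ux a b N) l) i j)) in H1.
  set (s := sumR N (fun l => f (ux a b N l) * mu (cell (ux a b N) l) i j)) in *.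
  replace (M i j - M j i) with ((s - M j i) - (s - M i j)) by ring.
  eapply Rle_lt_trans. apply Rabs_triang. rewrite Rabs_Ropp. lra.
  intros l Hl. f_equal. destruct (mm_psd p a b mu Hmu _ (borel_cell (ux a b N) l)) as [Hs _]. apply Hs; auto. Qed.

Lemma mom0 p mu a b M : is_matrix_measure p a b mu -> a < b -> is_moment p mu a b 0 M -> meq p M idm.
Proof. intros Hmu Hab H. eapply int_unique; eauto. apply int_fext with (fun _ => 1). intros; simpl; auto.
  apply int_one; auto. Qed.

Lemma ms_meq p a b T k A B : moment_set p a b T k A -> meq p A B -> moment_set p a b T k B.
Proof. intros [r [H1 [H2 H3]]] E. exists r; split; [auto|split; [auto|]]. eapply int_meq; eauto. Qed.

Lemma ms_sym p a b T k A : a < b -> moment_set p a b T k A -> msym p A.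
Proof. intros Hab [r [H1 [H2 H3]]]. eapply int_sym; eauto. Qed.

Definition Fmap (c : R) (C0 : Mat) (A : Mat) : Mat := fun i j => c * A i j + C0 i j.

Lemma qform_F p c C0 A v : qform p (Fmap c C0 A) v = c * qform p A v + qform p C0 v.
Proof. unfold Fmap. rewrite <- (Rmult_1_l (qform p C0 v)). rewrite <- qform_lin. apply qform_meq. intros i j _ _; ring. Qed.

Lemma msym_F p c C0 A : msym p A -> msym p C0 -> msym p (Fmap c C0 A).
Proof. intros H1 H2 i j Hi Hj. unfold Fmap. rewrite H1, H2; auto. Qed.

Section Order.
Variables (p : nat) (X Y : Mat -> Prop) (c : R) (C0 : Mat).
Hypothesis HC0 : msym p C0.
Hypothesis SX : forall A, X A -> msym p A.
Hypothesis SY : forall A, Y A -> msym p A.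
Hypothesis fwd : forall A, Y A -> X (Fmap c C0 A).
Hypothesis bwd : forall B, X B -> exists A, Y A /\ meq p B (Fmap c C0 A).

Lemma order_pos_max TX TY : 0 < c -> X TX -> (forall A, X A -> loewner_le p A TX) ->
  Y TY -> (forall A, Y A -> loewner_le p A TY) -> meq p TX (Fmap c C0 TY).
Proof. intros Hc HX MX HY MY. apply q_antisym; [apply SX; auto | apply msym_F; [apply SY; auto| auto] |]. intros v. apply Rle_antisym.
  - destruct (bwd TX HX) as [A [HA E]]. rewrite (qform_meq p _ _ v E), !qform_F.
    pose proof (loewner_q p _ _ (MY A HA) v). nra.
  - apply loewner_q. apply MX. apply fwd; auto. Qed.

Lemma order_pos_min TX TY : 0 < c -> X TX -> (forall A, X A -> loewner_le p TX A) ->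
  Y TY -> (forall A, Y A -> loewner_le p TY A) -> meq p TX (Fmap c C0 TY).
Proof. intros Hc HX MX HY MY. apply q_antisym; [apply SX; auto | apply msym_F; [apply SY; auto| auto] |]. intros v. apply Rle_antisym.
  - apply loewner_q. apply MX. apply fwd; auto.
  - destruct (bwd TX HX) as [A [HA E]]. rewrite (qform_meq p _ _ v E), !qform_F.
    pose proof (loewner_q p _ _ (MY A HA) v). nra. Qed.

Lemma order_neg TX TY : c < 0 -> X TX -> (forall A, X A -> loewner_le p A TX) ->
  Y TY -> (forall A, Y A -> loewner_le p TY A) -> meq p TX (Fmap c C0 TY).
Proof. intros Hc HX MX HY MY. apply q_antisym; [apply SX; auto | apply msym_F; [apply SY; auto| auto] |]. intros v. apply Rle_antisym.
  - destruct (bwd TX HX) as [A [HA E]]. rewrite (qform_meq p _ _ v E), !qform_F.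
    pose proof (loewner_q p _ _ (MY A HA) v). nra.
  - apply loewner_q. apply MX. apply fwd; auto. Qed.
End Order.

Lemma pd_scal p k S : pd p S -> 0 < k -> pd p (fun i j => k * S i j).
Proof. intros [Hs H] Hk. split. intros i j Hi Hj; rewrite Hs; auto.
  intros v Hv. rewrite (qform_meq p _ (fun i j => k * S i j + 0 * S i j) v) by (intros i j _ _; ring).
  rewrite qform_lin. specialize (H v Hv). nra. Qed.

Lemma triple_scal p a b c A B Cm i j : mmul p (fun i j => a * A i j) (mmul p (fun i j => b * B i j) (fun i j => c * Cm i j)) i j
  = a * b * c * mmul p A (mmul p B Cm) i j.
Proof. unfold mmul. rewrite <- sumR_scal. apply sumR_ext; intros l _.
  rewrite (sumR_ext p _ (fun m => (b * c) * (B l m * Cm m j))) by (intros; ring).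
  rewrite sumR_scal. ring. Qed.

Lemma final_scale p S1 S2 D1 D2 N1 N2 U V c : pd p S1 -> pd p S2 -> msym p D1 -> 0 < c ->
  meq p (mmul p S1 (mmul p S1 D1)) idm -> meq p (mmul p S2 (mmul p S2 D2)) idm ->
  meq p D2 (fun i j => c * D1 i j) -> meq p N2 (fun i j => c * N1 i j) ->
  meq p U (mmul p S1 (mmul p N1 S1)) -> meq p V (mmul p S2 (mmul p N2 S2)) -> meq p V U.
Proof. intros P1 P2 HD Hc E1 E2 ED EN EU EV.
  set (k := / sqrt c). assert (Hk : 0 < k) by (apply Rinv_0_lt_compat, sqrt_lt_R0; auto).
  assert (Hkk : k * k * c = 1) by (unfold k; rewrite <- Rinv_mult, sqrt_sqrt by lra; field; lra).
  set (S' := fun i j => k * S1 i j).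
  assert (HS' : meq p (mmul p S' (mmul p S' D2)) idm).
  { intros i j Hi Hj. rewrite (mmul_meq p S' S' (mmul p S' D2) (mmul p S' (fun i j => c * D1 i j))); auto.
    unfold S'. rewrite triple_scal, Hkk, Rmult_1_l. apply E1; auto.
    apply meq_refl. apply mmul_meq; auto. apply meq_refl. }
  assert (U2 : meq p S2 S') by (apply (pd_root_unique p S2 S' D2); auto; [apply pd_scal; auto|
    intros i j Hi Hj; rewrite ED, (ED j i); auto; rewrite HD; auto]).
  intros i j Hi Hj. rewrite EV, EU; auto.
  rewrite (mmul_meq p S2 S' (mmul p N2 S2) (mmul p (fun i j => c * N1 i j) (fun i j => k * S1 i j))); auto.
  unfold S'. rewrite triple_scal. replace (k * c * k) with (k * k * c) by ring. rewrite Hkk; ring.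
  apply mmul_meq; auto. Qed.

Lemma pf_pf_ext p al be r phi psi : is_matrix_measure p al be r -> (forall x, phi (psi x) = x) ->
  forall B, borel B -> meq p (pf phi (pf psi r) B) (r B).
Proof. intros Hr H B HB i j Hi Hj. unfold pf. symmetry. apply (mm_ext p al be r Hr); auto.
  intros x; rewrite H; tauto. Qed.

Lemma mom_idm p mu a b : is_matrix_measure p a b mu -> a < b -> is_moment p mu a b 0 idm.
Proof. intros. unfold is_moment. apply int_fext with (fun _ => 1). intros; simpl; auto. apply int_one; auto. Qed.

Definition Tx (n : nat) (T : nat -> Mat) (A : Mat) : nat -> Mat := fun i => if Nat.ltb i n then T i else A.

Lemma Tx_moments p r a b n T A : is_matrix_measure p a b r -> a < b -> meq p (T O) idm ->
  (forall j, (1 <= j)%nat -> (j < n)%nat -> is_moment p r a b j (T j)) -> is_moment p r a b n A ->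
  forall i, (i <= n)%nat -> is_moment p r a b i (Tx n T A i).
Proof. intros Hr Hab H0 Hl Ht i Hi. unfold Tx. destruct (Nat.ltb i n) eqn:E.
  apply Nat.ltb_lt in E. destruct i. eapply int_meq. apply meq_sym, H0. apply mom_idm; auto. apply Hl; lia.
  apply Nat.ltb_ge in E. replace i with n by lia. auto. Qed.

Lemma AM_Tx_low p s c0 j n T A : (j < n)%nat -> meq p (AM s c0 j (Tx n T A)) (AM s c0 j T).
Proof. intros Hj. apply AM_meq. intros i Hi. unfold Tx. rewrite (proj2 (Nat.ltb_lt i n)) by lia. apply meq_refl. Qed.

Lemma AM_Tx_top p s c0 n T A : meq p (AM s c0 n (Tx n T A)) (Fmap (s ^ n) (fun i j => sumR n (fun i0 => affc s c0 n i0 * T i0 i j)) A).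
Proof. intros i j _ _. rewrite AM_top. unfold Fmap, Tx. rewrite Nat.ltb_irrefl. f_equal.
  apply sumR_ext; intros l Hl. rewrite (proj2 (Nat.ltb_lt l n)); auto. Qed.

Lemma sum_sym p n (c : nat -> R) (T : nat -> Mat) : (forall i, (i < n)%nat -> msym p (T i)) ->
  msym p (fun a b => sumR n (fun i => c i * T i a b)).
Proof. intros H a b Ha Hb. apply sumR_ext; intros. rewrite H; auto. Qed.

Theorem part_a : forall (p : nat) (mu : mmeasure) (a b : R) (n : nat) (U V : Mat),
     is_matrix_measure p 0 1 mu -> a < b ->
     canonical_moment p 0 1 mu n U ->
     canonical_moment p a b (image_affine a b mu) n V ->
     meq p V U.
Proof. intros p mu a b n U V Hmu Hab CM1 CM2.
  destruct CM1 as [Hn [T1 [Tp1 [Tm1 [S1 [HT1 [HP1 [MP1 [HM1 [MM1 [PD1 [PS1 [E1 EU]]]]]]]]]]]]].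
  destruct CM2 as [_ [T2 [Tp2 [Tm2 [S2 [HT2 [HP2 [MP2 [HM2 [MM2 [PD2 [PS2 [E2 EV]]]]]]]]]]]]].
  set (s := b - a). assert (Hs : 0 < s) by (unfold s; lra). assert (Hs0 : s <> 0) by lra.
  set (nu := image_affine a b mu).
  assert (Enu : nu = pf (fun t => s * t + a) mu) by reflexivity.
  assert (M1 : forall t, 0 <= t <= 1 -> a <= s * t + a <= b) by (intros; unfold s; nra).
  assert (M2 : forall y, a <= y <= b -> 0 <= (y - a) / s <= 1).
  { intros y Hy. split. unfold Rdiv; apply Rmult_le_pos; [lra|left; apply Rinv_0_lt_compat; lra]. apply Rmult_le_reg_r with s; auto. unfold Rdiv.
    rewrite Rmult_assoc, Rinv_l by lra; unfold s in *; lra. }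
  set (s' := / s). set (c' := - a / s).
  assert (Hs' : 0 < s') by (apply Rinv_0_lt_compat; auto). assert (Hs0' : s' <> 0) by lra.
  assert (M3 : forall t, a <= t <= b -> 0 <= s' * t + c' <= 1).
  { intros t Ht. replace (s' * t + c') with ((t - a) / s) by (unfold s', c'; field; lra). auto. }
  assert (M4 : forall y, 0 <= y <= 1 -> a <= (y - c') / s' <= b).
  { intros y Hy. replace ((y - c') / s') with (s * y + a) by (unfold s', c'; field; lra). auto. }
  assert (Hphi : forall c, borel (fun x => s * x + a <= c)) by (apply affine_borel; auto).
  assert (Hpsi : forall c, borel (fun x => s' * x + c' <= c)) by (apply affine_borel; auto).
  assert (Hnu : is_matrix_measure p a b nu) by (rewrite Enu; apply pf_mm with 0 1; auto).
  assert (H01 : (0 < 1)%R) by lra.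
  assert (T10 : meq p (T1 O) idm) by (apply (mom0 p mu 0 1); auto; apply HT1; lia).
  assert (T20 : meq p (T2 O) idm) by (apply (mom0 p nu a b); auto; apply HT2; lia).
  assert (F2 : forall j, (j <= n)%nat -> meq p (T2 j) (AM s a j T1)).
  { intros j Hj. apply (int_unique p nu a b (fun x => x ^ j)); auto. apply HT2; auto.
    rewrite Enu. apply (mom_affine p 0 1 a b mu s a j T1); auto. intros; apply HT1; lia. }
  set (Cst := fun i j => sumR n (fun i0 => affc s a n i0 * T1 i0 i j)).
  assert (SC : msym p Cst).
  { apply sum_sym. intros i Hi. apply (int_sym p mu 0 1 (fun x => x ^ i)); auto. apply HT1; lia. }
  set (F := Fmap (s ^ n) Cst).
  assert (FW : forall r A, is_matrix_measure p 0 1 r -> (forall j, (1 <= j)%nat -> (j < n)%nat -> is_moment p r 0 1 j (T1 j)) ->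
             is_moment p r 0 1 n A -> moment_set p a b T2 n (F A)).
  { intros r A Hr Hl Ht. exists (pf (fun t => s * t + a) r). split. apply pf_mm with 0 1; auto.
    assert (Hm := Tx_moments p r 0 1 n T1 A Hr H01 T10 Hl Ht).
    split.
    - intros j Hj1 Hj2. eapply int_meq. 2: apply (mom_affine p 0 1 a b r s a j (Tx n T1 A)); auto; intros; apply Hm; lia.
      eapply meq_trans. apply AM_Tx_low; auto. apply meq_sym, F2; lia.
    - eapply int_meq. 2: apply (mom_affine p 0 1 a b r s a n (Tx n T1 A)); auto. apply AM_Tx_top. }
  assert (fwd : forall A, moment_set p 0 1 T1 n A -> moment_set p a b T2 n (F A)).
  { intros A [r [Hr [Hl Ht]]]. apply FW with r; auto. }
  assert (bwd : forall B, moment_set p a b T2 n B -> exists A, moment_set p 0 1 T1 n A /\ meq p B (F A)).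
  { intros B [r [Hr [Hl Ht]]].
    set (r' := pf (fun t => s' * t + c') r).
    assert (Hr' : is_matrix_measure p 0 1 r') by (apply pf_mm with a b; auto).
    assert (Hm := Tx_moments p r a b n T2 B Hr Hab T20 Hl Ht).
    exists (AM s' c' n (Tx n T2 B)).
    assert (L : forall j, (1 <= j)%nat -> (j < n)%nat -> is_moment p r' 0 1 j (T1 j)).
    { intros j Hj1 Hj2. eapply int_meq. 2: apply (mom_affine p a b 0 1 r s' c' j (Tx n T2 B)); auto; intros; apply Hm; lia.
      eapply meq_trans. apply AM_Tx_low; auto.
      apply (int_unique p mu 0 1 (fun x => x ^ j)); auto. 2: apply HT1; lia.
      apply int_mext with (pf (fun t => s' * t + c') nu).
      intros B0 HB0. rewrite Enu. apply (pf_pf_ext p 0 1 mu); auto. intros x. unfold s', c'. field. lra.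
      apply (mom_affine p a b 0 1 nu s' c' j T2); auto. intros; apply HT2; lia. }
    assert (Tt : is_moment p r' 0 1 n (AM s' c' n (Tx n T2 B))).
    { apply (mom_affine p a b 0 1 r s' c' n (Tx n T2 B)); auto. }
    split. exists r'; auto.
    destruct (FW r' _ Hr' L Tt) as [r2 [Hr2 [_ Ht2]]].
    apply (int_unique p r a b (fun x => x ^ n)); auto.
    apply int_mext with (pf (fun t => s * t + a) r').
    intros B0 HB0. apply (pf_pf_ext p a b r); auto. intros x. unfold s', c'. field. lra.
    assert (Hm' := Tx_moments p r' 0 1 n T1 _ Hr' H01 T10 L Tt).
    eapply int_meq. 2: apply (mom_affine p 0 1 a b r' s a n (Tx n T1 (AM s' c' n (Tx n T2 B)))); auto.
    apply AM_Tx_top. }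
  assert (SX : forall A, moment_set p a b T2 n A -> msym p A) by (intros; eapply ms_sym; [|eauto]; lra).
  assert (SY : forall A, moment_set p 0 1 T1 n A -> msym p A) by (intros; eapply ms_sym; [|eauto]; lra).
  assert (Hc : 0 < s ^ n) by (apply pow_lt; auto).
  pose proof (order_pos_max p _ _ (s ^ n) Cst SC SX SY fwd bwd Tp2 Tp1 Hc HP2 MP2 HP1 MP1) as EP.
  pose proof (order_pos_min p _ _ (s ^ n) Cst SC SX SY fwd bwd Tm2 Tm1 Hc HM2 MM2 HM1 MM1) as EM.
  assert (ET : meq p (T2 n) (F (T1 n))).
  { eapply meq_trans. apply F2; auto. intros i j _ _. rewrite AM_top. reflexivity. }
  apply (final_scale p S1 S2 (msub Tp1 Tm1) (msub Tp2 Tm2) (msub (T1 n) Tm1) (msub (T2 n) Tm2) U V (s ^ n)); auto.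
  apply PD1.
  intros i j Hi Hj. unfold msub. rewrite EP, EM; auto. unfold F, Fmap. ring.
  intros i j Hi Hj. unfold msub. rewrite ET, EM; auto. unfold F, Fmap. ring. Qed.

Lemma mid_scal p S D c i j : mmul p S (mmul p (fun i j => c * D i j) S) i j = c * mmul p S (mmul p D S) i j.
Proof. unfold mmul. rewrite <- sumR_scal. apply sumR_ext; intros l _.
  rewrite (sumR_ext p _ (fun m => c * (D l m * S m j))) by (intros; ring). rewrite sumR_scal. ring. Qed.

Lemma odd_canonical p mu a b k U : a < b -> is_matrix_measure p a b mu ->
  (forall B, borel B -> meq p (mu B) (pf (fun x => -1 * x + (a + b)) mu B)) ->
  (-1) ^ k = -1 -> canonical_moment p a b mu k U -> meq p U half_idm.
Proof. intros Hab Hmu Hsym Hk CM.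
  destruct CM as [Hn [T [Tp [Tm [S [HT [HP [MP [HM [MM [PD [PS [E1 EU]]]]]]]]]]]]].
  set (s := -1). set (c0 := a + b). assert (Hs0 : s <> 0) by (unfold s; lra).
  assert (M1 : forall t, a <= t <= b -> a <= s * t + c0 <= b) by (intros; unfold s, c0; lra).
  assert (M2 : forall y, a <= y <= b -> a <= (y - c0) / s <= b).
  { intros y Hy. replace ((y - c0) / s) with (a + b - y) by (unfold s, c0; field). lra. }
  assert (Hphi : forall c, borel (fun x => s * x + c0 <= c)) by (apply affine_borel; auto).
  assert (T0 : meq p (T O) idm) by (apply (mom0 p mu a b); auto; apply HT; lia).
  assert (F2 : forall j, (j <= k)%nat -> meq p (T j) (AM s c0 j T)).
  { intros j Hj. apply (int_unique p mu a b (fun x => x ^ j)); auto. apply HT; auto.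
    apply int_mext with (pf (fun x => s * x + c0) mu). intros B HB. apply meq_sym; auto.
    apply (mom_affine p a b a b mu s c0 j T); auto. intros; apply HT; lia. }
  set (Cst := fun i j => sumR k (fun i0 => affc s c0 k i0 * T i0 i j)).
  assert (SC : msym p Cst).
  { apply sum_sym. intros i Hi. apply (int_sym p mu a b (fun x => x ^ i)); auto. apply HT; lia. }
  set (F := Fmap (s ^ k) Cst).
  assert (fwd : forall A, moment_set p a b T k A -> moment_set p a b T k (F A)).
  { intros A [r [Hr [Hl Ht]]]. exists (pf (fun t => s * t + c0) r). split. apply pf_mm with a b; auto.
    assert (Hm := Tx_moments p r a b k T A Hr Hab T0 Hl Ht).
    split.
    - intros j Hj1 Hj2. eapply int_meq. 2: apply (mom_affine p a b a b r s c0 j (Tx k T A)); auto; intros; apply Hm; lia.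
      eapply meq_trans. apply AM_Tx_low; auto. apply meq_sym, F2; lia.
    - eapply int_meq. 2: apply (mom_affine p a b a b r s c0 k (Tx k T A)); auto. apply AM_Tx_top. }
  assert (Hsk : s ^ k = -1) by (unfold s; auto).
  assert (bwd : forall B, moment_set p a b T k B -> exists A, moment_set p a b T k A /\ meq p B (F A)).
  { intros B HB. exists (F B). split. apply fwd; auto. intros i j _ _. unfold F, Fmap. rewrite Hsk. ring. }
  assert (SX : forall A, moment_set p a b T k A -> msym p A) by (intros; eapply ms_sym; eauto).
  assert (Hc : s ^ k < 0) by lra.
  pose proof (order_neg p _ _ (s ^ k) Cst SC SX SX fwd bwd Tp Tm Hc HP MP HM MM) as EP.
  assert (ET : meq p (T k) (F (T k))).
  { eapply meq_trans. apply F2; auto. intros i j _ _. rewrite AM_top. reflexivity. }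
  assert (EN : meq p (msub (T k) Tm) (fun i j => / 2 * msub Tp Tm i j)).
  { intros i j Hi Hj. unfold msub. pose proof (ET i j Hi Hj) as X1. pose proof (EP i j Hi Hj) as X2.
    unfold F, Fmap in X1, X2. rewrite Hsk in X1, X2. lra. }
  assert (X : meq p (mmul p S (mmul p (msub (T k) Tm) S)) (mmul p S (mmul p (fun i j => /2 * msub Tp Tm i j) S)))
    by (apply mmul_meq; [apply meq_refl| apply mmul_meq; [exact EN| apply meq_refl]]).
  intros i j Hi Hj. rewrite EU, X by auto.
  rewrite mid_scal. rewrite (SDS_id p S (msub Tp Tm)); auto. apply PS. apply PD. Qed.

Theorem part_b : forall (p : nat) (mu : mmeasure) (a b : R) (n : nat) (U : Mat),
     a < b -> is_matrix_measure p a b mu -> symmetric_measure p a b mu ->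
     (1 <= n)%nat ->
     canonical_moment p a b mu (2 * n - 1) U ->
     meq p U half_idm.
Proof. intros p mu a b n U Hab Hmu Hsym Hn CM. apply (odd_canonical p mu a b (2 * n - 1)); auto.
  intros B HB i j Hi Hj. rewrite (Hsym B HB); auto. unfold pf.
  apply (mm_ext p a b mu Hmu). apply borel_preimage; auto. intros c. apply borel_ext with (fun x => -1 * x + (a+b) <= c).
  apply affine_borel; lra. intros x; split; intros; lra. intros x. replace (-1 * x + (a + b)) with (a + b - x) by ring. tauto.
  auto. auto.
  replace (2 * n - 1)%nat with (S (2 * (n - 1))) by lia. apply pow_1_odd. Qed.

Lemma absq a b : 0 <= a -> 0 <= b -> Rabs ((a - b) * (a - b)) <= Rabs (a * a - b * b).
Proof. intros Ha Hb. pose proof (Rle_0_sqr (a-b)) as Q. unfold Rsqr in Q. rewrite (Rabs_right ((a-b)*(a-b))) by lra.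
  destruct (Rle_dec b a). rewrite Rabs_right. nra. apply Rle_ge. nra. rewrite Rabs_left. nra. nra. Qed.

Lemma sq_le x c : 0 <= x -> 0 <= c -> x * x <= c * c -> x <= c.
Proof. intros Hx Hc H. destruct (Rle_dec x c); auto. exfalso. assert (c < x) by lra.
  assert (c * c < x * x) by (apply Rle_lt_trans with (c * x); [apply Rmult_le_compat_l|apply Rmult_lt_compat_r]; lra). lra. Qed.

Lemma sqrt_diff s t : 0 <= s -> 0 <= t -> Rabs (sqrt s - sqrt t) <= sqrt (Rabs (s - t)).
Proof. intros Hs Ht. pose proof (sqrt_pos s). pose proof (sqrt_pos t). pose proof (sqrt_sqrt s Hs). pose proof (sqrt_sqrt t Ht).
  pose proof (sqrt_pos (Rabs (s - t))). pose proof (sqrt_sqrt (Rabs (s - t)) (Rabs_pos _)).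
  apply sq_le; auto. apply Rabs_pos. rewrite H4, <- Rabs_mult.
  replace (Rabs (s - t)) with (Rabs (sqrt s * sqrt s - sqrt t * sqrt t)) by (rewrite H1, H2; auto). apply absq; auto. Qed.

Lemma sq_close t y d : 0 <= t -> 0 <= y -> 0 < d -> Rabs (t * t - y) <= d * d -> Rabs (t - sqrt y) <= d.
Proof. intros Ht Hy Hd H. pose proof (sqrt_pos y). pose proof (sqrt_sqrt y Hy).
  apply sq_le; [apply Rabs_pos|lra|]. rewrite <- Rabs_mult. eapply Rle_trans; [|apply H].
  replace (t * t - y) with (t * t - sqrt y * sqrt y) by (rewrite H1; auto). apply absq; auto. Qed.

Lemma sq_borel c : borel (fun x => x ^ 2 <= c).
Proof. destruct (Rlt_dec c 0).
  apply borel_ext with (fun _ => False). apply borel_empty. intros x; split; [tauto|]. intros. pose proof (pow2_ge_0 x). lra.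
  apply borel_ext with (fun x => - sqrt c <= x <= sqrt c). apply borel_cc.
  intros x. pose proof (sqrt_pos c). pose proof (sqrt_sqrt c ltac:(lra)). split; intros H1; nra. Qed.

Lemma sqrt_borel c : borel (fun y => sqrt y <= c).
Proof. destruct (Rlt_dec c 0).
  apply borel_ext with (fun _ => False). apply borel_empty. intros x; split; [tauto|]. intros. pose proof (sqrt_pos x). lra.
  apply borel_ext with (fun y => y <= c * c). constructor.
  intros y. destruct (Rle_dec y 0). rewrite sqrt_neg_0 by auto. split; intros; nra.
  pose proof (sqrt_pos y). pose proof (sqrt_sqrt y ltac:(lra)). split; intros; nra. Qed.

Lemma mix_mm p a b mu nu : is_matrix_measure p a b mu -> is_matrix_measure p a b nu ->
  is_matrix_measure p a b (fun B i j => / 2 * mu B i j + / 2 * nu B i j).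
Proof. intros [P1 [A1 [C1 N1]]] [P2 [A2 [C2 N2]]]. split; [|split; [|split]].
  - intros B HB. destruct (P1 B HB) as [S1 Q1]. destruct (P2 B HB) as [S2 Q2]. split.
    intros i j Hi Hj. rewrite S1, S2; auto. intros v. rewrite qform_lin. specialize (Q1 v). specialize (Q2 v). lra.
  - intros A C HA Hd HC HCx i j Hi Hj.
    assert (K : Un_cv (fun _ => /2) (/2)) by (intros e He; exists O; intros; unfold Rdist; rewrite Rminus_diag, Rabs_R0; auto).
    pose proof (CV_mult _ _ _ _ (A1 A C HA Hd HC HCx i j Hi Hj) K) as X1.
    pose proof (CV_mult _ _ _ _ (A2 A C HA Hd HC HCx i j Hi Hj) K) as X2.
    pose proof (CV_plus _ _ _ _ X1 X2) as X. simpl in X.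
    intros e He. destruct (X e He) as [N HN]. exists N. intros m Hm. specialize (HN m Hm).
    rewrite sumR_plus, !sumR_scal. unfold Rdist in *. replace (/ 2 * sumR (S m) (fun l => mu (A l) i j) + / 2 * sumR (S m) (fun l => nu (A l) i j) - (/ 2 * mu C i j + / 2 * nu C i j))
      with (sumR (S m) (fun n0 => mu (A n0) i j) * / 2 + sumR (S m) (fun n0 => nu (A n0) i j) * / 2 - (mu C i j * / 2 + nu C i j * / 2)) by ring. auto.
  - intros B HB Ho i j Hi Hj. cbv beta. rewrite (C1 B HB Ho i j Hi Hj), (C2 B HB Ho i j Hi Hj); ring.
  - intros i j Hi Hj. cbv beta. rewrite (N1 i j Hi Hj), (N2 i j Hi Hj). field. Qed.

Lemma sqrt_le1 y : 0 <= y <= 1 -> 0 <= sqrt y <= 1.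
Proof. intros H. pose proof (sqrt_pos y). pose proof (sqrt_sqrt y ltac:(lra)). split; auto. apply sq_le; lra. Qed.

Lemma ucont_sqrt g : ucont 0 1 g -> ucont 0 1 (fun y => g (sqrt y)).
Proof. intros Hg eps He. destruct (Hg eps He) as [d [Hd H]]. exists (d * d); split. nra.
  intros s t Hs Ht Hst. apply H; try apply sqrt_le1; auto.
  eapply Rle_trans. apply sqrt_diff; lra. apply sq_le. apply sqrt_pos. lra.
  rewrite sqrt_sqrt by apply Rabs_pos. auto. Qed.

Lemma int_sq p sig g M : is_matrix_measure p (-1) 1 sig ->
  is_integral p sig (-1) 1 (fun x => g (x ^ 2)) M -> ucont (-1) 1 (fun x => g (x ^ 2)) ->
  is_integral p (pf (fun x => x ^ 2) sig) 0 1 g M.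
Proof. intros Hs HI Hu. apply (transfer p (-1) 1 0 1 sig) with (f := fun x => g (x ^ 2)); auto; try lra.
  intros d eta Hd He. exists (d * d); split. nra. intros n x xi HS.
  destruct (spart_gpart _ _ _ _ _ _ HS) as [[HB [Hc Hdis]] [Ht Hf]].
  set (A := fun l t => if Nat.ltb l n then (0 <= t /\ cell x l (t ^ 2)) else (t < 0 /\ cell x (l - n) (t ^ 2))).
  set (tau := fun l => if Nat.ltb l n then sqrt (xi l) else - sqrt (xi (l - n)%nat)).
  set (c := fun l => if Nat.ltb l n then g (xi l) else g (xi (l - n)%nat)).
  assert (HA1 : forall l t, (l < n)%nat -> A l t <-> 0 <= t /\ cell x l (t ^ 2)).
  { intros l t Hl. unfold A. rewrite (proj2 (Nat.ltb_lt l n) Hl). tauto. }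
  assert (HA2 : forall l t, (n <= l)%nat -> A l t <-> t < 0 /\ cell x (l - n) (t ^ 2)).
  { intros l t Hl. unfold A. rewrite (proj2 (Nat.ltb_ge l n) Hl). tauto. }
  assert (Hcb : forall l, borel (fun t => cell x l (t ^ 2))).
  { intros l. apply (borel_preimage (fun t => t ^ 2) sq_borel (cell x l)), borel_cell. }
  exists (n + n)%nat, A, tau, c. split; [split; [split; [|split]|split]|split].
  - intros l Hl. destruct (Nat.ltb l n) eqn:E.
    + apply Nat.ltb_lt in E. apply borel_iff with (fun t => 0 <= t /\ cell x l (t ^ 2)). apply borel_and; auto. apply borel_ge.
      intros t; rewrite HA1; tauto.
    + apply Nat.ltb_ge in E. apply borel_iff with (fun t => t < 0 /\ cell x (l - n) (t ^ 2)). apply borel_and; auto. apply borel_lt.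
      intros t; rewrite HA2; tauto.
  - intros t Ht1. assert (Q : 0 <= t ^ 2 <= 1) by (split; [apply pow2_ge_0| simpl; nra]).
    destruct (Hc _ Q) as [l [Hl Hcl]]. destruct (Rle_dec 0 t).
    exists l; split; [lia|]. apply HA1; auto. exists (n + l)%nat; split; [lia|]. apply HA2; [lia|].
    replace (n + l - n)%nat with l by lia. split; auto; lra.
  - intros t l r Ht1 Hl Hr H1 H2. assert (Q : 0 <= t ^ 2 <= 1) by (split; [apply pow2_ge_0| simpl; nra]).
    destruct (Nat.lt_ge_cases l n) as [E1|E1]; destruct (Nat.lt_ge_cases r n) as [E2|E2].
    + apply HA1 in H1; auto. apply HA1 in H2; auto. eapply Hdis; eauto; tauto.
    + apply HA1 in H1; auto. apply HA2 in H2; auto. lra.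
    + apply HA2 in H1; auto. apply HA1 in H2; auto. lra.
    + apply HA2 in H1; auto. apply HA2 in H2; auto. assert (l - n = r - n)%nat by (eapply Hdis; eauto; try lia; tauto). lia.
  - intros l Hl. unfold tau. destruct (Nat.ltb l n) eqn:E.
    apply Nat.ltb_lt in E. pose proof (sqrt_le1 (xi l) (Ht l E)). lra.
    apply Nat.ltb_ge in E. pose proof (sqrt_le1 (xi (l - n)%nat) (Ht (l - n)%nat ltac:(lia))). lra.
  - intros l t Hl Ht1 HAl. unfold tau. destruct (Nat.ltb l n) eqn:E.
    + apply Nat.ltb_lt in E. apply HA1 in HAl; auto. destruct HAl as [H0 Hcl].
      apply sq_close; auto. apply Ht; auto. replace (t * t) with (t ^ 2) by ring. apply Hf; auto.
      split; [apply pow2_ge_0| simpl; nra].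
    + apply Nat.ltb_ge in E. apply HA2 in HAl; auto. destruct HAl as [H0 Hcl].
      replace (t - - sqrt (xi (l - n)%nat)) with (- (-t - sqrt (xi (l - n)%nat))) by ring. rewrite Rabs_Ropp.
      apply sq_close; try lra. apply Ht; lia. replace (- t * - t) with (t ^ 2) by ring. apply Hf; try lia; auto.
      split; [apply pow2_ge_0| simpl; nra].
  - intros l Hl _. unfold c, tau. destruct (Nat.ltb l n) eqn:E.
    + apply Nat.ltb_lt in E. rewrite pow2_sqrt by apply (Ht l E). rewrite Rminus_diag, Rabs_R0; lra.
    + apply Nat.ltb_ge in E. replace ((- sqrt (xi (l - n)%nat)) ^ 2) with (sqrt (xi (l - n)%nat) ^ 2) by ring.
      rewrite pow2_sqrt by apply (Ht (l - n)%nat ltac:(lia)). rewrite Rminus_diag, Rabs_R0; lra.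
  - intros i j Hi Hj. unfold gsum, pf. rewrite sumR_split.
    rewrite <- sumR_plus. apply sumR_ext; intros l Hl.
    unfold c. rewrite (proj2 (Nat.ltb_lt l n) Hl), (proj2 (Nat.ltb_ge (n + l) n)) by lia.
    replace (n + l - n)%nat with l by lia. rewrite <- Rmult_plus_distr_l. f_equal.
    rewrite (mm_fin p (-1) 1 sig Hs 2 (fun k => match k with O => A l | _ => A (n + l)%nat end)); auto.
    simpl. ring.
    + intros [|[|k]] Hk. apply borel_iff with (fun t => 0 <= t /\ cell x l (t ^ 2)). apply borel_and; auto. apply borel_ge.
      intros t; rewrite HA1; tauto. apply borel_iff with (fun t => t < 0 /\ cell x l (t ^ 2)). apply borel_and; auto. apply borel_lt.
      intros t; rewrite HA2 by lia. replace (n + l - n)%nat with l by lia. tauto. lia.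
    + intros [|[|k]] [|[|k']] t Hk Hk' Hne H1 H2; try lia.
      apply HA1 in H1; auto. apply HA2 in H2; [lra|lia]. apply HA2 in H1; [|lia]. apply HA1 in H2; auto. lra.
    + intros t; split. intros H. destruct (Rle_dec 0 t). exists O; split; [lia|]. apply HA1; auto.
      exists 1%nat; split; [lia|]. simpl. apply HA2; [lia|]. replace (n + l - n)%nat with l by lia. split; auto; lra.
      intros [[|[|k]] [Hk H]]. apply HA1 in H; tauto. apply HA2 in H; [|lia]. replace (n + l - n)%nat with l in H by lia. tauto. lia.
Qed.

Lemma int_sqrt p rho g M : is_matrix_measure p 0 1 rho ->
  is_integral p rho 0 1 (fun y => g (sqrt y)) M -> ucont 0 1 (fun y => g (sqrt y)) -> ucont (-1) 1 g ->
  is_integral p (pf sqrt rho) (-1) 1 g M.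
Proof. intros Hr HI Hu Hg. apply (transfer p 0 1 (-1) 1 rho) with (f := fun y => g (sqrt y)); auto; try lra.
  apply RH1 with (psi := fun y => Rmax 0 y ^ 2).
  - apply sqrt_borel.
  - intros t Ht. pose proof (sqrt_le1 t Ht). lra.
  - intros y Hy. unfold Rmax; destruct (Rle_dec 0 y); simpl; nra.
  - intros d eta Hd He. destruct (Hg eta He) as [dg [Hdg HG]].
    exists (Rmin (d / 2) dg); split. apply Rmin_pos; lra.
    intros y t Hy Ht Hyt. pose proof (Rmin_l (d/2) dg). pose proof (Rmin_r (d/2) dg).
    pose proof (sqrt_le1 t Ht). set (m := Rmax 0 y).
    assert (Hm : 0 <= m <= 1 /\ Rabs (sqrt t - m) <= Rabs (sqrt t - y) /\ Rabs (y - m) <= Rabs (sqrt t - y)).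
    { unfold m, Rmax. destruct (Rle_dec 0 y). split; [lra|]. split; [lra|]. rewrite Rminus_diag, Rabs_R0; apply Rabs_pos.
      unfold Rabs; repeat destruct Rcase_abs; lra. }
    destruct Hm as [Hm1 [Hm2 Hm3]]. split.
    + pose proof (sqrt_sqrt t ltac:(lra)).
      replace (t - m ^ 2) with ((sqrt t - m) * (sqrt t + m)) by (simpl; nra).
      rewrite Rabs_mult. rewrite (Rabs_right (sqrt t + m)) by lra.
      apply Rle_trans with (Rabs (sqrt t - m) * 2). apply Rmult_le_compat_l. apply Rabs_pos. lra. lra.
    + simpl. rewrite Rmult_1_r, sqrt_square by (unfold m, Rmax; destruct (Rle_dec 0 y); lra).
      apply HG; auto. lra. lra. Qed.

Lemma ucont_pow_neg j : ucont (-1) 1 (fun t => (-1 * t + 0) ^ j).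
Proof. apply (ucont_comp_aff (-1) 1 (-1) 0 (fun y => y ^ j)). intros; apply ucont_pow. Qed.

Definition sig_of (rho : mmeasure) : mmeasure :=
  fun B i j => / 2 * pf sqrt rho B i j + / 2 * pf (fun t => -1 * t + 0) (pf sqrt rho) B i j.

Lemma sig_mm p rho : is_matrix_measure p 0 1 rho -> is_matrix_measure p (-1) 1 (sig_of rho).
Proof. intros Hr. assert (H1 : is_matrix_measure p (-1) 1 (pf sqrt rho)).
  { apply pf_mm with 0 1; auto. apply sqrt_borel. intros x Hx. pose proof (sqrt_le1 x Hx); lra. }
  apply mix_mm; auto. apply pf_mm with (-1) 1; auto. apply affine_borel; lra. intros; lra. Qed.

Lemma sig_mom p rho j K : is_matrix_measure p 0 1 rho -> is_integral p rho 0 1 (fun y => sqrt y ^ j) K ->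
  is_moment p (sig_of rho) (-1) 1 j (fun a b => / 2 * K a b + / 2 * ((-1) ^ j * K a b)).
Proof. intros Hr HK. unfold is_moment, sig_of.
  assert (H1 : is_matrix_measure p (-1) 1 (pf sqrt rho)).
  { apply pf_mm with 0 1; auto. apply sqrt_borel. intros x Hx. pose proof (sqrt_le1 x Hx); lra. }
  apply int_mix.
  - apply int_sqrt; auto. apply (ucont_sqrt (fun y => y ^ j)), ucont_pow. apply ucont_pow.
  - refine (int_affine p (-1) 1 (-1) 1 (pf sqrt rho) (-1) 0 (fun y => y ^ j) _ H1 ltac:(lra) ltac:(lra) _ _ _ _).
    intros t Ht; lra.
    intros y Hy. replace ((y - 0) / -1) with (-y) by field. lra.
    refine (int_sqrt p rho (fun t => (-1 * t + 0) ^ j) _ Hr _ _ _).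
    apply (int_fext p rho 0 1 (fun y => (-1) ^ j * sqrt y ^ j)). intros; rewrite <- Rpow_mult_distr. f_equal; ring.
    apply int_scal; auto.
    apply (ucont_sqrt (fun t => (-1 * t + 0) ^ j)). apply (ucont_comp_aff 0 1 (-1) 0 (fun y => y ^ j)). intros; apply ucont_pow.
    apply ucont_pow_neg. apply ucont_pow_neg. Qed.

Lemma cells_agree p nu mu : is_matrix_measure p 0 1 nu -> is_matrix_measure p 0 1 mu ->
  (forall y, 0 <= y <= 1 -> meq p (nu (fun t => 0 <= t <= y)) (mu (fun t => 0 <= t <= y))) ->
  forall d n x xi, spart 0 1 d n x xi -> forall l, (l < n)%nat -> meq p (nu (cell x l)) (mu (cell x l)).
Proof. intros Hn Hm H d n x xi HS l Hl i j Hi Hj.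
  pose proof (spart_mono _ _ _ _ _ _ HS) as Mo. destruct HS as [Hn0 [H0 [Hend Hx]]].
  assert (Hb : forall k, (k <= n)%nat -> 0 <= x k <= 1).
  { intros k Hk. split. rewrite <- H0. apply Mo; lia. rewrite <- Hend. apply Mo; lia. }
  destruct l as [|l].
  - assert (E : forall t, cell x 0 t <-> 0 <= t <= x 1%nat).
    { intros t. unfold cell. rewrite H0. split. intros [[[_ A]|[A _]] B]; [split; auto| lia]. intros [A B]; split; auto. }
    rewrite (mm_ext p 0 1 nu Hn (cell x 0) (fun t => 0 <= t <= x 1%nat)), (mm_ext p 0 1 mu Hm (cell x 0) (fun t => 0 <= t <= x 1%nat)); auto;
      try apply borel_cell. apply H; auto; apply Hb; lia.
  - assert (Dec : forall (r : mmeasure), is_matrix_measure p 0 1 r ->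
      r (fun t => 0 <= t <= x (S (S l))) i j = r (fun t => 0 <= t <= x (S l)) i j + r (cell x (S l)) i j).
    { intros r Hr. rewrite (mm_fin p 0 1 r Hr 2 (fun k => match k with O => fun t => 0 <= t <= x (S l) | _ => cell x (S l) end)); auto.
      simpl; ring.
      intros [|[|k]] Hk; try lia. apply borel_cc. apply borel_cell.
      intros [|[|k]] [|[|k']] t Hk Hk' Hne A B; try lia; simpl in A, B; unfold cell in *.
      destruct B as [[[E _]|[_ E]] _]; [lia|lra]. destruct A as [[[E _]|[_ E]] _]; [lia|lra].
      apply borel_cc.
      intros t. assert (x (S l) < x (S (S l))) by (apply Hx; lia). assert (0 <= x (S l)) by (apply Hb; lia). split.
      intros [A B]. destruct (Rle_dec t (x (S l))). exists O; split; [lia|]; lra. exists 1%nat; split; [lia|].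
      unfold cell; split; auto. right; split; [lia|lra].
      intros [[|[|k]] [Hk A]]; try lia. lra. unfold cell in A. destruct A as [[[E _]|[_ E]] B]; [lia|lra]. }
    assert (EX : forall (r : mmeasure), is_matrix_measure p 0 1 r ->
      r (cell x (S l)) i j = r (fun t => 0 <= t <= x (S (S l))) i j - r (fun t => 0 <= t <= x (S l)) i j).
    { intros r Hr. rewrite (Dec r Hr). ring. }
    rewrite (EX nu Hn), (EX mu Hm), !H; auto; apply Hb; lia. Qed.

Lemma int_cells p nu mu g M : is_matrix_measure p 0 1 nu -> is_matrix_measure p 0 1 mu ->
  (forall y, 0 <= y <= 1 -> meq p (nu (fun t => 0 <= t <= y)) (mu (fun t => 0 <= t <= y))) ->
  is_integral p nu 0 1 g M -> is_integral p mu 0 1 g M.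
Proof. intros Hn Hm H HI. apply int_spart. intros eps He. destruct (proj1 (int_spart _ _ _ _ _ _) HI eps He) as [d [Hd K]].
  exists d; split; auto. intros n x xi HS i j Hi Hj. specialize (K n x xi HS i j Hi Hj). unfold gsum in *.
  rewrite (sumR_ext n _ (fun l => g (xi l) * nu (cell x l) i j)); auto.
  intros l Hl. rewrite (cells_agree p nu mu Hn Hm H d n x xi HS l Hl); auto. Qed.

Lemma ucont_ext a b f g : (forall x, f x = g x) -> ucont a b f -> ucont a b g.
Proof. intros E H eps He. destruct (H eps He) as [d [Hd K]]. exists d; split; auto. intros. rewrite <- !E; auto. Qed.

Lemma sym_pf p sig : is_matrix_measure p (-1) 1 sig -> symmetric_measure p (-1) 1 sig ->
  forall B, borel B -> meq p (pf (fun t => -1 * t + 0) sig B) (sig B).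
Proof. intros Hs Hsym B HB i j Hi Hj. rewrite (Hsym B HB); auto. unfold pf.
  apply (mm_ext p (-1) 1 sig Hs). apply borel_preimage; auto. apply affine_borel; lra.
  intros x. replace (-1 + 1 - x) with (-1 * x + 0) by ring. tauto. all: auto. Qed.

Lemma odd_zero p sig m M : is_matrix_measure p (-1) 1 sig -> symmetric_measure p (-1) 1 sig ->
  (-1) ^ m = -1 -> is_moment p sig (-1) 1 m M -> meq p M (fun _ _ => 0).
Proof. intros Hs Hsym Hm HM.
  assert (H1 : is_integral p (pf (fun t => -1 * t + 0) sig) (-1) 1 (fun y => y ^ m) (fun i j => (-1) ^ m * M i j)).
  { refine (int_affine p (-1) 1 (-1) 1 sig (-1) 0 (fun y => y ^ m) _ Hs ltac:(lra) ltac:(lra) _ _ _ _).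
    intros; lra. intros y Hy. replace ((y - 0) / -1) with (-y) by field. lra.
    apply (int_fext p sig (-1) 1 (fun y => (-1) ^ m * y ^ m)). intros; rewrite <- Rpow_mult_distr. f_equal; ring.
    apply int_scal; auto. apply ucont_pow_neg. }
  apply int_mext with (nu := sig) in H1. 2: apply sym_pf; auto.
  pose proof (int_unique p sig (-1) 1 _ _ _ ltac:(lra) HM H1) as E.
  intros i j Hi Hj. specialize (E i j Hi Hj). rewrite Hm in E. lra. Qed.

Lemma sq_mm p r : is_matrix_measure p (-1) 1 r -> is_matrix_measure p 0 1 (pf (fun x => x ^ 2) r).
Proof. intros Hr. apply pf_mm with (-1) 1; auto. apply sq_borel. intros x Hx. split. apply pow2_ge_0. simpl; nra. Qed.

Lemma sq_mom p r i M : is_matrix_measure p (-1) 1 r -> is_moment p r (-1) 1 (2 * i) M ->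
  is_moment p (pf (fun x => x ^ 2) r) 0 1 i M.
Proof. intros Hr H. unfold is_moment. apply int_sq; auto.
  apply (int_fext p r (-1) 1 (fun x => x ^ (2 * i))). intros; apply pow_mult. apply H.
  apply (ucont_ext (-1) 1 (fun x => x ^ (2 * i))). intros; apply pow_mult. apply ucont_pow. Qed.

Lemma sqrt_even_fun i y : 0 <= y <= 1 -> sqrt y ^ (2 * i) = y ^ i.
Proof. intros H. rewrite pow_mult, pow2_sqrt; lra. Qed.

Theorem part_c : forall (p : nat) (mu sigma : mmeasure),
     is_matrix_measure p 0 1 mu ->
     is_matrix_measure p (-1) 1 sigma ->
     symmetric_measure p (-1) 1 sigma ->
     (forall x, 0 <= x ->
        meq p (sigma (fun t => - x <= t <= x)) (mu (fun t => 0 <= t <= x ^ 2))) ->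
     (forall (n : nat) (U : Mat), (1 <= n)%nat ->
        canonical_moment p (-1) 1 sigma (2 * n - 1) U -> meq p U half_idm) /\
     (forall (n : nat) (U V : Mat), (1 <= n)%nat ->
        canonical_moment p (-1) 1 sigma (2 * n) U ->
        canonical_moment p 0 1 mu n V -> meq p U V).
Proof. intros p mu sig Hmu Hs Hsym Hrel. split.
  { intros n U Hn CM. apply (part_b p sig (-1) 1 n U); auto; lra. }
  intros n U V Hn CMs CMm.
  destruct CMs as [_ [T [Tp [Tm [Ss [HT [HP [MP [HM [MM [PD [PS [E1 EU]]]]]]]]]]]]].
  destruct CMm as [_ [T1 [Tp1 [Tm1 [S1 [HT1 [HP1 [MP1 [HM1 [MM1 [PD1 [PS1 [E2 EV]]]]]]]]]]]]].
  assert (H01 : (0 < 1)%R) by lra. assert (Hm11 : (-1 < 1)%R) by lra.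
  assert (Odd0 : forall i, (S (2 * i) <= 2 * n)%nat -> meq p (T (S (2 * i))) (fun _ _ => 0)).
  { intros i Hi. apply (odd_zero p sig (S (2 * i))); auto; apply pow_1_odd. }
  assert (Hsq : is_matrix_measure p 0 1 (pf (fun x => x ^ 2) sig)) by (apply sq_mm; auto).
  assert (Agree : forall y, 0 <= y <= 1 -> meq p (pf (fun x => x ^ 2) sig (fun t => 0 <= t <= y)) (mu (fun t => 0 <= t <= y))).
  { intros y Hy i j Hi Hj. unfold pf. cbv beta. pose proof (sqrt_pos y). pose proof (sqrt_sqrt y ltac:(lra)).
    assert (B1 : borel (fun x => 0 <= x ^ 2 <= y)) by exact (borel_preimage (fun x => x ^ 2) sq_borel (fun t => 0 <= t <= y) (borel_cc 0 y)).
    assert (I1 : forall x, 0 <= x ^ 2 <= y <-> - sqrt y <= x <= sqrt y).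
    { intros x. simpl. rewrite Rmult_1_r. split; intros [A B]; split; nra. }
    rewrite (mm_ext p (-1) 1 sig Hs _ _ B1 I1 i j Hi Hj).
    rewrite (Hrel (sqrt y) H i j Hi Hj).
    apply (mm_ext p 0 1 mu Hmu); auto. apply borel_cc. intros t. rewrite pow2_sqrt by lra. tauto. }
  assert (Even : forall j, (j <= n)%nat -> meq p (T (2 * j)%nat) (T1 j)).
  { intros j Hj. apply (int_unique p mu 0 1 (fun x => x ^ j)); auto. 2: apply HT1; auto.
    apply (int_cells p (pf (fun x => x ^ 2) sig)); auto. apply sq_mom; auto. apply HT; lia. }
  set (X := moment_set p (-1) 1 T (2 * n)). set (Y := moment_set p 0 1 T1 n).
  assert (Y2X : forall A, Y A -> X A).
  { intros A [r [Hr [Hl Ht]]]. exists (sig_of r). split. apply sig_mm; auto. split.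
    - intros j Hj1 Hj2. destruct (Nat.Even_or_Odd j) as [[i Ei]|[i Ei]].
      + subst j. assert (K : is_integral p r 0 1 (fun y => sqrt y ^ (2 * i)) (T1 i)).
        { apply (int_fext p r 0 1 (fun y => y ^ i)). intros; symmetry; apply sqrt_even_fun; auto. apply Hl; lia. }
        eapply int_meq. 2: apply (sig_mom p r (2 * i) (T1 i)); auto.
        intros a b Ha Hb. rewrite pow_1_even, (Even i) by (auto; lia). field.
      + subst j. replace (2 * i + 1)%nat with (S (2 * i)) by lia.
        destruct (int_exists p 0 1 r Hr H01 (fun y => sqrt y ^ S (2 * i))) as [K HK].
        apply (ucont_sqrt (fun y => y ^ S (2 * i))), ucont_pow.
        eapply int_meq. 2: apply (sig_mom p r (S (2 * i)) K); auto.
        intros a b Ha Hb. rewrite pow_1_odd, (Odd0 i) by (auto; lia). field.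
    - assert (K : is_integral p r 0 1 (fun y => sqrt y ^ (2 * n)) A).
      { apply (int_fext p r 0 1 (fun y => y ^ n)). intros; symmetry; apply sqrt_even_fun; auto. apply Ht. }
      eapply int_meq. 2: apply (sig_mom p r (2 * n) A); auto.
      intros a b Ha Hb. rewrite pow_1_even. field. }
  assert (X2Y : forall B, X B -> Y B).
  { intros B [r [Hr [Hl Ht]]]. exists (pf (fun x => x ^ 2) r). split. apply sq_mm; auto. split.
    - intros j Hj1 Hj2. eapply int_meq. apply Even; lia. apply sq_mom; auto. apply Hl; lia.
    - apply sq_mom; auto. }
  set (Z := fun _ _ : nat => 0).
  assert (HZ : msym p Z) by (intros i j _ _; reflexivity).
  assert (fwd : forall A, Y A -> X (Fmap 1 Z A)).
  { intros A HA. apply ms_meq with A. apply Y2X; auto. intros i j _ _; unfold Fmap, Z; ring. }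
  assert (bwd : forall B, X B -> exists A, Y A /\ meq p B (Fmap 1 Z A)).
  { intros B HB. exists B; split. apply X2Y; auto. intros i j _ _; unfold Fmap, Z; ring. }
  assert (SX : forall A, X A -> msym p A) by (intros; eapply ms_sym; [|eauto]; lra).
  assert (SY : forall A, Y A -> msym p A) by (intros; eapply ms_sym; [|eauto]; lra).
  pose proof (order_pos_max p X Y 1 Z HZ SX SY fwd bwd Tp Tp1 H01 HP MP HP1 MP1) as EP.
  pose proof (order_pos_min p X Y 1 Z HZ SX SY fwd bwd Tm Tm1 H01 HM MM HM1 MM1) as EM.
  assert (ET : meq p (T (2 * n)%nat) (T1 n)) by (apply Even; auto).
  apply (final_scale p S1 Ss (msub Tp1 Tm1) (msub Tp Tm) (msub (T1 n) Tm1) (msub (T (2 * n)%nat) Tm) V U 1); auto.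
  apply PD1.
  intros i j Hi Hj. unfold msub. rewrite EP, EM; auto. unfold Fmap, Z. ring.
  intros i j Hi Hj. unfold msub. rewrite ET, EM; auto. unfold Fmap, Z. ring. Qed.


Theorem lemma3p1 :
  (* (a) *)
  (forall (p : nat) (mu : mmeasure) (a b : R) (n : nat) (U V : Mat),
     is_matrix_measure p 0 1 mu -> a < b ->
     canonical_moment p 0 1 mu n U ->
     canonical_moment p a b (image_affine a b mu) n V ->
     meq p V U) /\
  (* (b) *)
  (forall (p : nat) (mu : mmeasure) (a b : R) (n : nat) (U : Mat),
     a < b -> is_matrix_measure p a b mu -> symmetric_measure p a b mu ->
     (1 <= n)%nat ->
     canonical_moment p a b mu (2 * n - 1) U ->
     meq p U half_idm) /\
  (* (c) *)
  (forall (p : nat) (mu sigma : mmeasure),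
     is_matrix_measure p 0 1 mu ->
     is_matrix_measure p (-1) 1 sigma ->
     symmetric_measure p (-1) 1 sigma ->
     (forall x, 0 <= x ->
        meq p (sigma (fun t => - x <= t <= x)) (mu (fun t => 0 <= t <= x ^ 2))) ->
     (forall (n : nat) (U : Mat), (1 <= n)%nat ->
        canonical_moment p (-1) 1 sigma (2 * n - 1) U -> meq p U half_idm) /\
     (forall (n : nat) (U V : Mat), (1 <= n)%nat ->
        canonical_moment p (-1) 1 sigma (2 * n) U ->
        canonical_moment p 0 1 mu n V -> meq p U V)).
Proof. split; [exact part_a| split; [exact part_b| exact part_c]]. Qed.
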